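(* Consider first-order logic in a language with a single binary relation symbol $E$ (besides equality), and let $\Gamma$ be a set of first-order sentences whose models are exactly the undirected graphs $(V,E)$ ($E$ irreflexive and symmetric) such that: (i) $(V,E)$ has no cycles; (ii) for every integer $k>0$, (a) there are at least $k$ vertices of degree $4$, and (b) every vertex $x$ whose distance to some vertex of degree $4$ equals $k$ has degree $3$. Then (1) every finite $\Delta\subseteq\Gamma$ has a rigid model, and (2) for every model $\mathcal M$ of $\Gamma$, $\mathrm{Aut}(\mathcal M)$ has a subgroup isomorphic to $S(\omega)$.
   Context: The degree of a vertex is the number of its neighbours; the distance between two vertices is the least number of edges on a path joining them. A structure is rigid if its only automorphism is the identity. $S(\omega)$ is the group of all permutations of $\omega=\{0,1,2,\dots\}$. *)

(* Defs.v *)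
From Stdlib Require Import Arith List.
Import ListNotations.

Inductive formula : Type :=
  | FEq  : nat -> nat -> formula
  | FRel : nat -> nat -> formula
  | FFalse : formula
  | FNot : formula -> formula
  | FAnd : formula -> formula -> formula
  | FOr  : formula -> formula -> formula
  | FImp : formula -> formula -> formula
  | FAll : nat -> formula -> formula
  | FEx  : nat -> formula -> formula.

Fixpoint free_in (x : nat) (phi : formula) : Prop :=
  match phi with
  | FEq i j | FRel i j => x = i \/ x = j
  | FFalse => False
  | FNot p => free_in x p
  | FAnd p q | FOr p q | FImp p q => free_in x p \/ free_in x q
  | FAll y p | FEx y p => x <> y /\ free_in x p
  end.

Definition sentence (phi : formula) : Prop := forall x, ~ free_in x phi.

Definition update {V : Type} (env : nat -> V) (n : nat) (v : V) : nat -> V :=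
  fun m => if Nat.eqb m n then v else env m.

Fixpoint sat {V : Type} (E : V -> V -> Prop) (env : nat -> V) (phi : formula)
  : Prop :=
  match phi with
  | FEq i j => env i = env j
  | FRel i j => E (env i) (env j)
  | FFalse => False
  | FNot p => ~ sat E env p
  | FAnd p q => sat E env p /\ sat E env q
  | FOr p q => sat E env p \/ sat E env q
  | FImp p q => sat E env p -> sat E env q
  | FAll n p => forall v : V, sat E (update env n v) p
  | FEx n p => exists v : V, sat E (update env n v) p
  end.

Definition is_model (V : Type) (E : V -> V -> Prop) (T : formula -> Prop)
  : Prop :=
  inhabited V /\ forall phi, T phi -> forall env : nat -> V, sat E env phi.

Definition has_degree {V : Type} (E : V -> V -> Prop) (x : V) (n : nat)
  : Prop :=
  exists l : list V, NoDup l /\ length l = n /\ (forall y, E x y <-> In y l).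

Inductive walk {V : Type} (E : V -> V -> Prop) : V -> V -> nat -> Prop :=
  | walk_nil : forall x, walk E x x 0
  | walk_cons : forall x y z n, E x y -> walk E y z n -> walk E x z (S n).

Definition distance {V : Type} (E : V -> V -> Prop) (x y : V) (k : nat)
  : Prop :=
  walk E x y k /\ forall m, walk E x y m -> k <= m.

Fixpoint chain {V : Type} (E : V -> V -> Prop) (l : list V) : Prop :=
  match l with
  | x :: ((y :: _) as t) => E x y /\ chain E t
  | _ => True
  end.

Definition has_cycle {V : Type} (E : V -> V -> Prop) : Prop :=
  exists (x : V) (l : list V),
    NoDup (x :: l) /\ 2 <= length l /\ chain E (x :: l) /\
    E (last l x) x.

Definition undirected_graph {V : Type} (E : V -> V -> Prop) : Prop :=
  (forall x, ~ E x x) /\ (forall x y, E x y -> E y x).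

Definition in_class (V : Type) (E : V -> V -> Prop) : Prop :=
  undirected_graph E /\
  ~ has_cycle E /\
  (forall k : nat, 0 < k ->
     (exists l : list V, NoDup l /\ k <= length l /\
        forall v, In v l -> has_degree E v 4) /\
     (forall x y : V, has_degree E y 4 -> distance E y x k ->
        has_degree E x 3)).

Definition automorphism {V : Type} (E : V -> V -> Prop) (f : V -> V) : Prop :=
  (exists g : V -> V, (forall x, g (f x) = x) /\ (forall x, f (g x) = x)) /\
  (forall x y, E x y <-> E (f x) (f y)).

Definition rigid (V : Type) (E : V -> V -> Prop) : Prop :=
  forall f, automorphism E f -> forall x, f x = x.

Record perm_nat : Type := {
  pfun : nat -> nat;
  pinv : nat -> nat;
  pinv_l : forall n, pinv (pfun n) = n;
  pinv_r : forall n, pfun (pinv n) = n }.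

Definition perm_comp (p q : perm_nat) : perm_nat.
Proof.
  refine {| pfun := fun n => pfun p (pfun q n);
            pinv := fun n => pinv q (pinv p n) |}.
  - intro n. rewrite (pinv_l p). apply pinv_l.
  - intro n. rewrite (pinv_r q). apply pinv_r.
Defined.

(** Aut(V,E) has a subgroup isomorphic to S(omega): an injective group
    homomorphism S(omega) -> Aut(V,E) (its image is such a subgroup). *)
Definition embeds_S_omega (V : Type) (E : V -> V -> Prop) : Prop :=
  exists Phi : perm_nat -> V -> V,
    (forall p, automorphism E (Phi p)) /\
    (forall p q x, Phi (perm_comp p q) x = Phi p (Phi q x)) /\
    (forall p q, (forall x, Phi p x = Phi q x) -> forall n, pfun p n = pfun q n).

(* Main.v *)
Require Import Defs.
From Stdlib Require Import List.
From Stdlib Require Import Arith Lia Classical ClassicalEpsilon Eqdep_dec Bool FinFun.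
Import ListNotations.

Section Walks.
Context {V : Type} (E : V -> V -> Prop).

Lemma walk_app : forall x y z m n, walk E x y m -> walk E y z n -> walk E x z (m + n).
Proof.
  intros x y z m n H; revert z n; induction H; intros; simpl; auto.
  econstructor; eauto.
Qed.

Lemma walk_one : forall x y, E x y -> walk E x y 1.
Proof. intros; econstructor; eauto; constructor. Qed.

Lemma walk_snoc : forall x y z n, walk E x y n -> E y z -> walk E x z (S n).
Proof. intros. replace (S n) with (n + 1) by lia. eapply walk_app; eauto using walk_one. Qed.

Lemma walk_last : forall x z n, walk E x z (S n) -> exists y, walk E x y n /\ E y z.
Proof.
  intros x z n; revert x z; induction n; intros x z H; inversion H; subst.
  - inversion H4; subst. exists x; split; [constructor|auto].
  - destruct (IHn _ _ H4) as [w [Hw Hw']]. exists w; split; auto. econstructor; eauto.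
Qed.

Lemma walk_0 : forall x y, walk E x y 0 -> x = y.
Proof. intros x y H; inversion H; auto. Qed.

Lemma walk_rev : (forall x y, E x y -> E y x) -> forall x y n, walk E x y n -> walk E y x n.
Proof.
  intros Hs x y n H; induction H. constructor.
  replace (S n) with (n + 1) by lia. eapply walk_app; eauto using walk_one.
Qed.
End Walks.

Lemma sat_ext : forall {V} (E : V -> V -> Prop) phi (e e' : nat -> V),
  (forall x, free_in x phi -> e x = e' x) -> (sat E e phi <-> sat E e' phi).
Proof.
  intros V E phi; induction phi; intros e e' H; simpl in *.
  - rewrite (H n), (H n0); auto; tauto.
  - rewrite (H n), (H n0); auto; tauto.
  - tauto.
  - rewrite (IHphi e e'); auto; tauto.
  - rewrite (IHphi1 e e'), (IHphi2 e e'); auto; tauto.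
  - rewrite (IHphi1 e e'), (IHphi2 e e'); auto; tauto.
  - rewrite (IHphi1 e e'), (IHphi2 e e'); auto; tauto.
  - split; intros Hs v; [rewrite <- (IHphi (update e n v))|rewrite (IHphi (update e n v) (update e' n v))]; auto;
    intros x Hx; unfold update; destruct (Nat.eqb_spec x n); auto.
  - split; intros [v Hs]; exists v; [rewrite <- (IHphi (update e n v))|rewrite (IHphi (update e n v) (update e' n v))]; auto;
    intros x Hx; unfold update; destruct (Nat.eqb_spec x n); auto.
Qed.

Lemma sentence_env : forall {V} (E : V -> V -> Prop) phi (e e' : nat -> V),
  sentence phi -> (sat E e phi <-> sat E e' phi).
Proof. intros. apply sat_ext. intros x Hx; exfalso; eapply H; eauto. Qed.

Fixpoint qd (phi : formula) : nat :=
  match phi with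
  | FEq _ _ | FRel _ _ | FFalse => 0
  | FNot p => qd p
  | FAnd p q | FOr p q | FImp p q => Nat.max (qd p) (qd q)
  | FAll _ p | FEx _ p => S (qd p)
  end.

Section Game.
Context {V1 V2 : Type} (E1 : V1 -> V1 -> Prop) (E2 : V2 -> V2 -> Prop).

Definition atom (e1 : nat -> V1) (e2 : nat -> V2) : Prop :=
  forall i j, (e1 i = e1 j <-> e2 i = e2 j) /\ (E1 (e1 i) (e1 j) <-> E2 (e2 i) (e2 j)).

Fixpoint Game (n : nat) (e1 : nat -> V1) (e2 : nat -> V2) : Prop :=
  atom e1 e2 /\
  match n with
  | 0 => True
  | S n' => (forall x v1, exists v2, Game n' (update e1 x v1) (update e2 x v2)) /\
            (forall x v2, exists v1, Game n' (update e1 x v1) (update e2 x v2))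
  end.

Lemma game_atom : forall n e1 e2, Game n e1 e2 -> atom e1 e2.
Proof. intros [|n] e1 e2 H; apply H. Qed.

Lemma game_sat : forall phi n e1 e2, Game n e1 e2 -> qd phi <= n ->
  (sat E1 e1 phi <-> sat E2 e2 phi).
Proof.
  induction phi; intros m e1 e2 HG Hq; simpl in *.
  - apply (game_atom _ _ _ HG).
  - apply (game_atom _ _ _ HG).
  - tauto.
  - rewrite (IHphi m e1 e2); auto; tauto.
  - rewrite (IHphi1 m e1 e2), (IHphi2 m e1 e2); auto; try tauto; lia.
  - rewrite (IHphi1 m e1 e2), (IHphi2 m e1 e2); auto; try tauto; lia.
  - rewrite (IHphi1 m e1 e2), (IHphi2 m e1 e2); auto; try tauto; lia.
  - destruct m as [|m]; [lia|]. destruct HG as [_ [Hf Hb]]. split.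
    + intros H v2. destruct (Hb n v2) as [v1 Hv]. rewrite <- (IHphi m _ _ Hv); auto; lia.
    + intros H v1. destruct (Hf n v1) as [v2 Hv]. rewrite (IHphi m _ _ Hv); auto; lia.
  - destruct m as [|m]; [lia|]. destruct HG as [_ [Hf Hb]]. split.
    + intros [v1 H]. destruct (Hf n v1) as [v2 Hv]. exists v2. rewrite <- (IHphi m _ _ Hv); auto; lia.
    + intros [v2 H]. destruct (Hb n v2) as [v1 Hv]. exists v1. rewrite (IHphi m _ _ Hv); auto; lia.
Qed.
End Game.

Definition Ball {V} (E : V -> V -> Prop) (e : nat -> V) r x :=
  exists i k, k <= r /\ walk E (e i) x k.
Definition BallPt {V} (E : V -> V -> Prop) (v : V) r x :=
  exists k, k <= r /\ walk E v x k.

Definition LocIso {V1 V2} (E1 : V1 -> V1 -> Prop) (E2 : V2 -> V2 -> Prop)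
  (P1 : V1 -> Prop) (P2 : V2 -> Prop) (f : V1 -> V2) (g : V2 -> V1) : Prop :=
  (forall x, P1 x -> P2 (f x) /\ g (f x) = x) /\
  (forall y, P2 y -> P1 (g y) /\ f (g y) = y) /\
  (forall x y, P1 x -> P1 y -> (E1 x y <-> E2 (f x) (f y))).

Definition Rich {V1 V2} (E1 : V1 -> V1 -> Prop) (E2 : V2 -> V2 -> Prop) r :=
  forall (v1 : V1) (l2 : list V2), exists v2 f g, f v1 = v2 /\ g v2 = v1 /\
    (forall u x k k', In u l2 -> walk E2 u x k -> walk E2 v2 x k' -> False) /\
    LocIso E1 E2 (BallPt E1 v1 r) (BallPt E2 v2 r) f g.

Fixpoint rr (n : nat) : nat := match n with 0 => 0 | S n => 3 * rr n + 1 end.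

Definition Inv {V1 V2} (E1 : V1 -> V1 -> Prop) (E2 : V2 -> V2 -> Prop) n
  (e1 : nat -> V1) (e2 : nat -> V2) :=
  exists f g l1 l2, (forall i, f (e1 i) = e2 i /\ g (e2 i) = e1 i) /\
    (forall i, In (e1 i) l1) /\ (forall i, In (e2 i) l2) /\
    LocIso E1 E2 (Ball E1 e1 (rr n)) (Ball E2 e2 (rr n)) f g.

Lemma LocIso_sym : forall {V1 V2} (E1 : V1 -> V1 -> Prop) (E2 : V2 -> V2 -> Prop) P1 P2 f g,
  LocIso E1 E2 P1 P2 f g -> LocIso E2 E1 P2 P1 g f.
Proof.
  intros V1 V2 E1 E2 P1 P2 f g [H1 [H2 H3]]. split; [|split]; auto.
  intros x y Hx Hy. destruct (H2 x Hx) as [Hx1 Hx2]. destruct (H2 y Hy) as [Hy1 Hy2].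
  rewrite (H3 _ _ Hx1 Hy1), Hx2, Hy2. tauto.
Qed.

Lemma Inv_sym : forall {V1 V2} (E1 : V1 -> V1 -> Prop) (E2 : V2 -> V2 -> Prop) n e1 e2,
  Inv E1 E2 n e1 e2 -> Inv E2 E1 n e2 e1.
Proof.
  intros. destruct H as [f [g [l1 [l2 [H1 [H2 [H3 H4]]]]]]].
  exists g, f, l2, l1. split; [intro i; split; apply H1|split; [auto|split; [auto|apply LocIso_sym; auto]]].
Qed.

Lemma LocIso_transport : forall {V1 V2} (E1 : V1 -> V1 -> Prop) (E2 : V2 -> V2 -> Prop) P1 P2 f g,
  LocIso E1 E2 P1 P2 f g -> forall p k z,
  (forall z' k', k' <= k -> walk E1 p z' k' -> P1 z') ->
  walk E1 p z k -> walk E2 (f p) (f z) k.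
Proof.
  intros V1 V2 E1 E2 P1 P2 f g [_ [_ H3]] p k. induction k; intros z HP Hw.
  - apply walk_0 in Hw; subst; constructor.
  - destruct (walk_last _ _ _ _ Hw) as [y [Hy Hyz]].
    apply walk_snoc with (f y).
    + apply IHk; auto. intros; apply (HP z' k'); auto.
    + apply H3; auto. apply (HP y k); auto. apply (HP z (S k)); auto.
Qed.

Lemma LocIso_sub : forall {V1 V2} (E1 : V1 -> V1 -> Prop) (E2 : V2 -> V2 -> Prop) P1 P2 Q1 Q2 f g,
  LocIso E1 E2 P1 P2 f g -> (forall x, Q1 x -> P1 x) -> (forall y, Q2 y -> P2 y) ->
  (forall x, Q1 x -> Q2 (f x)) -> (forall y, Q2 y -> Q1 (g y)) -> LocIso E1 E2 Q1 Q2 f g.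
Proof.
  intros V1 V2 E1 E2 P1 P2 Q1 Q2 f g [H1 [H2 H3]] S1 S2 M1 M2. split; [|split].
  - intros x Hx; split; auto. apply H1; auto.
  - intros y Hy; split; auto. apply H2; auto.
  - intros; apply H3; auto.
Qed.

Section Forth.
Context {V1 V2 : Type} (E1 : V1 -> V1 -> Prop) (E2 : V2 -> V2 -> Prop).
Hypothesis S1 : forall x y, E1 x y -> E1 y x.
Hypothesis S2 : forall x y, E2 x y -> E2 y x.

Lemma upd_same : forall {V} (e : nat -> V) x v, update e x v x = v.
Proof. intros; unfold update; rewrite Nat.eqb_refl; auto. Qed.
Lemma upd_other : forall {V} (e : nat -> V) x v j, j <> x -> update e x v j = e j.
Proof. intros; unfold update; destruct (Nat.eqb_spec j x); congruence. Qed.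

Lemma forth : forall n, Rich E1 E2 (rr n) -> forall e1 e2, Inv E1 E2 (S n) e1 e2 ->
  forall x v1, exists v2, Inv E1 E2 n (update e1 x v1) (update e2 x v2).
Proof.
  intros n HR e1 e2 [f [g [l1 [l2 [Hpt [Hl1 [Hl2 HL]]]]]]] x v1.
  set (r := rr n). assert (HRr : rr (S n) = 3 * r + 1) by reflexivity.
  pose proof HL as [Hf [Hg Hadj]]. pose proof (LocIso_sym _ _ _ _ _ _ HL) as HLs.
  destruct (classic (exists i k, k <= 2 * r + 1 /\ walk E1 (e1 i) v1 k)) as [Hnear|Hfar].
  -
    destruct Hnear as [i0 [k0 [Hk0 Hw0]]].
    exists (f v1). exists f, g, (v1 :: l1), (f v1 :: l2).
    assert (Pv1 : Ball E1 e1 (rr (S n)) v1) by (exists i0, k0; split; auto; lia).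
    assert (Tr1 : forall j k z, k <= rr (S n) -> walk E1 (e1 j) z k -> walk E2 (e2 j) (f z) k).
    { intros j k z Hk Hw. rewrite <- (proj1 (Hpt j)). eapply LocIso_transport; eauto.
      intros z' k' Hk' Hw'. exists j, k'; split; auto; lia. }
    assert (Tr2 : forall j k z, k <= rr (S n) -> walk E2 (e2 j) z k -> walk E1 (e1 j) (g z) k).
    { intros j k z Hk Hw. rewrite <- (proj2 (Hpt j)). eapply LocIso_transport; eauto.
      intros z' k' Hk' Hw'. exists j, k'; split; auto; lia. }
    split; [intro i; split|split; [intro i|split; [intro i|]]].
    + unfold update; destruct (Nat.eqb_spec i x); [|apply Hpt]. auto.
    + unfold update; destruct (Nat.eqb_spec i x); [|apply Hpt]. apply Hf; auto.
    + unfold update; destruct (Nat.eqb_spec i x); simpl; auto.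
    + unfold update; destruct (Nat.eqb_spec i x); simpl; auto.
    + eapply LocIso_sub; eauto.
      * intros z [j [k [Hk Hw]]]. unfold update in Hw. destruct (Nat.eqb_spec j x).
        -- exists i0, (k0 + k); split; [lia|]. eapply walk_app; eauto.
        -- exists j, k; split; auto; lia.
      * intros z [j [k [Hk Hw]]]. unfold update in Hw. destruct (Nat.eqb_spec j x).
        -- exists i0, (k0 + k); split; [lia|]. eapply walk_app; [apply Tr1; [lia|exact Hw0]|exact Hw].
        -- exists j, k; split; auto; lia.
      * intros z [j [k [Hk Hw]]]. exists j, k; split; auto. unfold update in *.
        destruct (Nat.eqb_spec j x).
        -- assert (Hz : walk E1 (e1 i0) z (k0 + k)) by (eapply walk_app; eauto).
           eapply LocIso_transport with (P1 := Ball E1 e1 (rr (S n))); eauto.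
           intros z' k' Hk' Hw'. exists i0, (k0 + k'); split; [lia|]. eapply walk_app; eauto.
        -- apply Tr1; auto; lia.
      * intros z [j [k [Hk Hw]]]. exists j, k; split; auto. unfold update in *.
        destruct (Nat.eqb_spec j x).
        -- assert (Hv' : walk E2 (e2 i0) (f v1) k0) by (apply Tr1; auto; lia).
           replace v1 with (g (f v1)) by (apply Hf; auto).
           eapply LocIso_transport with (P1 := Ball E2 e2 (rr (S n))); eauto.
           intros z' k' Hk' Hw'. exists i0, (k0 + k'); split; [lia|]. eapply walk_app; eauto.
        -- apply Tr2; auto; lia.
  -
    destruct (HR v1 l2) as [v2 [f' [g' [Hfv [Hgv [Hfr HL']]]]]].
    pose proof HL' as [Hf' [Hg' Hadj']].
    exists v2.
    set (f2 := fun z => if excluded_middle_informative (BallPt E1 v1 r z) then f' z else f z).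
    set (g2 := fun z => if excluded_middle_informative (BallPt E2 v2 r z) then g' z else g z).
    exists f2, g2, (v1 :: l1), (v2 :: l2).
    assert (F1 : forall z, Ball E1 e1 r z -> BallPt E1 v1 r z -> False).
    { intros z [j [k [Hk Hw]]] [k' [Hk' Hw']]. apply Hfar. exists j, (k + k'); split; [lia|].
      eapply walk_app; eauto. apply walk_rev; auto. }
    assert (F2 : forall z, Ball E2 e2 (rr (S n)) z -> BallPt E2 v2 r z -> False).
    { intros z [j [k [Hk Hw]]] [k' [Hk' Hw']]. eapply Hfr; eauto. }
    assert (Tr1 : forall j k z, k <= r -> walk E1 (e1 j) z k -> walk E2 (e2 j) (f z) k).
    { intros j k z Hk Hw. rewrite <- (proj1 (Hpt j)). eapply LocIso_transport; eauto.
      intros z' k' Hk' Hw'. exists j, k'; split; auto; lia. }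
    assert (Tr2 : forall j k z, k <= r -> walk E2 (e2 j) z k -> walk E1 (e1 j) (g z) k).
    { intros j k z Hk Hw. rewrite <- (proj2 (Hpt j)). eapply LocIso_transport; eauto.
      intros z' k' Hk' Hw'. exists j, k'; split; auto; lia. }
    assert (B1 : forall z, Ball E1 e1 r z -> Ball E1 e1 (rr (S n)) z).
    { intros z [j [k [Hk Hw]]]. exists j, k; split; auto; lia. }
    assert (B2 : forall z, Ball E2 e2 r z -> Ball E2 e2 (rr (S n)) z).
    { intros z [j [k [Hk Hw]]]. exists j, k; split; auto; lia. }
    assert (f2a : forall z, BallPt E1 v1 r z -> f2 z = f' z).
    { intros; unfold f2; destruct excluded_middle_informative; tauto. }
    assert (f2b : forall z, ~ BallPt E1 v1 r z -> f2 z = f z).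
    { intros; unfold f2; destruct excluded_middle_informative; tauto. }
    assert (g2a : forall z, BallPt E2 v2 r z -> g2 z = g' z).
    { intros; unfold g2; destruct excluded_middle_informative; tauto. }
    assert (g2b : forall z, ~ BallPt E2 v2 r z -> g2 z = g z).
    { intros; unfold g2; destruct excluded_middle_informative; tauto. }
    assert (Pv1 : BallPt E1 v1 r v1) by (exists 0; split; [lia|constructor]).
    assert (Pv2 : BallPt E2 v2 r v2) by (exists 0; split; [lia|constructor]).
    assert (C1 : forall z, Ball E1 (update e1 x v1) r z ->
              BallPt E1 v1 r z \/ (~ BallPt E1 v1 r z /\ exists j k, j <> x /\ k <= r /\ walk E1 (e1 j) z k)).
    { intros z [j [k [Hk Hw]]]. unfold update in Hw. destruct (Nat.eqb_spec j x).
      - left; exists k; auto.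
      - right; split. intro Hb; apply (F1 z); auto; exists j, k; auto. exists j, k; auto. }
    assert (C2 : forall z, Ball E2 (update e2 x v2) r z ->
              BallPt E2 v2 r z \/ (~ BallPt E2 v2 r z /\ exists j k, j <> x /\ k <= r /\ walk E2 (e2 j) z k)).
    { intros z [j [k [Hk Hw]]]. unfold update in Hw. destruct (Nat.eqb_spec j x).
      - left; exists k; auto.
      - right; split. intro Hb; apply (F2 z); auto; exists j, k; split; auto; lia. exists j, k; auto. }
    assert (D1 : forall z, BallPt E1 v1 r z -> Ball E1 (update e1 x v1) r z).
    { intros z [k [Hk Hw]]. exists x, k; rewrite upd_same; auto. }
    assert (D2 : forall z, BallPt E2 v2 r z -> Ball E2 (update e2 x v2) r z).
    { intros z [k [Hk Hw]]. exists x, k; rewrite upd_same; auto. }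
    assert (D1' : forall z j k, j <> x -> k <= r -> walk E1 (e1 j) z k -> Ball E1 (update e1 x v1) r z).
    { intros z j k Hj Hk Hw. exists j, k; rewrite upd_other; auto. }
    assert (D2' : forall z j k, j <> x -> k <= r -> walk E2 (e2 j) z k -> Ball E2 (update e2 x v2) r z).
    { intros z j k Hj Hk Hw. exists j, k; rewrite upd_other; auto. }
    split; [intro i; split|split; [intro i|split; [intro i|split; [|split]]]].
    + unfold update; destruct (Nat.eqb_spec i x).
      * rewrite f2a; auto.
      * assert (~ BallPt E1 v1 r (e1 i)).
        { intro Hb; apply (F1 (e1 i)); auto. exists i, 0; split; [lia|constructor]. }
        rewrite f2b; auto. apply Hpt.
    + unfold update; destruct (Nat.eqb_spec i x).
      * rewrite g2a; auto.
      * assert (~ BallPt E2 v2 r (e2 i)).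
        { intro Hb; apply (F2 (e2 i)); auto. exists i, 0; split; [lia|constructor]. }
        rewrite g2b; auto. apply Hpt.
    + unfold update; destruct (Nat.eqb_spec i x); simpl; auto.
    + unfold update; destruct (Nat.eqb_spec i x); simpl; auto.
    + intros z Hz. destruct (C1 z Hz) as [Hb|[Hnb [j [k [Hj [Hk Hw]]]]]].
      * rewrite f2a; auto. destruct (Hf' z Hb) as [H1 H2]. rewrite g2a; auto.
      * rewrite f2b; auto. pose proof (Tr1 _ _ _ Hk Hw) as Hw2. split. eapply D2'; eauto.
        rewrite g2b. apply Hf. apply B1; exists j, k; auto.
        intro Hb2. apply (F2 (f z)); auto. exists j, k; split; auto; lia.
    + intros z Hz. destruct (C2 z Hz) as [Hb|[Hnb [j [k [Hj [Hk Hw]]]]]].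
      * rewrite g2a; auto. destruct (Hg' z Hb) as [H1 H2]. rewrite f2a; auto.
      * rewrite g2b; auto. pose proof (Tr2 _ _ _ Hk Hw) as Hw2. split. eapply D1'; eauto.
        rewrite f2b. apply Hg. apply B2; exists j, k; auto.
        intro Hb2. apply (F1 (g z)); auto. exists j, k; auto.
    +
      intros z w Hz Hw'. 
      destruct (C1 z Hz) as [Hbz|[Hnbz [j [k [Hj [Hk Hwz]]]]]];
      destruct (C1 w Hw') as [Hbw|[Hnbw [j' [k' [Hj' [Hk' Hww]]]]]].
      * rewrite f2a, f2a; auto.
      * rewrite f2a, f2b; auto. split; intro HE.
        -- exfalso. destruct Hbz as [kz [Hkz Hwz]]. apply Hfar. exists j', (S k' + kz); split; [lia|].
           eapply walk_app. eapply walk_snoc; [exact Hww|apply S1; exact HE]. apply walk_rev; auto.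
        -- exfalso. destruct (Hf' z Hbz) as [[kz [Hkz Hwz]] _].
           eapply Hfr; [apply (Hl2 j')| |apply Hwz]. eapply walk_snoc; [apply Tr1; [exact Hk'|exact Hww]|apply S2; exact HE].
      * rewrite f2b, f2a; auto. split; intro HE.
        -- exfalso. destruct Hbw as [kw [Hkw Hww]]. apply Hfar. exists j, (S k + kw); split; [lia|].
           eapply walk_app. eapply walk_snoc; [exact Hwz|exact HE]. apply walk_rev; auto.
        -- exfalso. destruct (Hf' w Hbw) as [[kw [Hkw Hww]] _].
           eapply Hfr; [apply (Hl2 j)| |apply Hww]. eapply walk_snoc; [apply Tr1; [exact Hk|exact Hwz]|exact HE].
      * rewrite f2b, f2b; auto. apply Hadj; apply B1; [exists j, k|exists j', k']; auto.
Qed.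
End Forth.

Lemma inv_game : forall {V1 V2} (E1 : V1 -> V1 -> Prop) (E2 : V2 -> V2 -> Prop),
  (forall x y, E1 x y -> E1 y x) -> (forall x y, E2 x y -> E2 y x) ->
  forall n, (forall m, m < n -> Rich E1 E2 (rr m) /\ Rich E2 E1 (rr m)) ->
  forall e1 e2, Inv E1 E2 n e1 e2 -> Game E1 E2 n e1 e2.
Proof.
  intros V1 V2 E1 E2 S1 S2 n. induction n; intros HR e1 e2 HI.
  - split; auto. destruct HI as [f [g [l1 [l2 [Hpt [_ [_ [Hf [Hg Hadj]]]]]]]]].
    intros i j. split.
    + split; intro H. rewrite <- (proj1 (Hpt i)), <- (proj1 (Hpt j)), H; auto.
      rewrite <- (proj2 (Hpt i)), <- (proj2 (Hpt j)), H; auto.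
    + rewrite <- (proj1 (Hpt i)), <- (proj1 (Hpt j)). apply Hadj; [exists i, 0|exists j, 0]; split; try lia; constructor.
  - split; [|split].
    + destruct HI as [f [g [l1 [l2 [Hpt [_ [_ [Hf [Hg Hadj]]]]]]]]].
      intros i j. split.
      * split; intro H. rewrite <- (proj1 (Hpt i)), <- (proj1 (Hpt j)), H; auto.
        rewrite <- (proj2 (Hpt i)), <- (proj2 (Hpt j)), H; auto.
      * rewrite <- (proj1 (Hpt i)), <- (proj1 (Hpt j)). apply Hadj; [exists i, 0|exists j, 0]; split; try lia; constructor.
    + intros x v1. destruct (forth E1 E2 S1 S2 n (proj1 (HR n ltac:(lia))) e1 e2 HI x v1) as [v2 Hv].
      exists v2. apply IHn; [intros; apply HR; lia|exact Hv].
    + intros x v2. destruct (forth E2 E1 S2 S1 n (proj2 (HR n ltac:(lia))) e2 e1 (Inv_sym _ _ _ _ _ HI) x v2) as [v1 Hv].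
      exists v1. apply IHn; [intros; apply HR; lia|apply Inv_sym; exact Hv].
Qed.

Lemma inv_init : forall {V1 V2} (E1 : V1 -> V1 -> Prop) (E2 : V2 -> V2 -> Prop) n (v1 : V1),
  Rich E1 E2 (rr n) -> exists v2 : V2, Inv E1 E2 n (fun _ => v1) (fun _ => v2).
Proof.
  intros V1 V2 E1 E2 n v1 HR. destruct (HR v1 nil) as [v2 [f [g [H1 [H2 [_ HL]]]]]].
  exists v2, f, g, [v1], [v2]. split; [intro i; split; auto|split; [intro i; simpl; auto|split; [intro i; simpl; auto|]]].
  eapply LocIso_sub; eauto.
  - intros z [i [k Hk]]; exists k; auto.
  - intros z [i [k Hk]]; exists k; auto.
  - intros z [i [k Hk]]. exists 0. apply (proj1 HL). exists k; auto.
  - intros z [i [k Hk]]. exists 0. apply (proj1 (proj2 HL)). exists k; auto.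
Qed.

Section Fam.
Variable Sb : nat -> list nat -> bool.
Definition VF := {x : nat * list nat | Sb (fst x) (snd x) = true}.
Definition EF (x y : VF) : Prop :=
  fst (proj1_sig x) = fst (proj1_sig y) /\
  exists i, snd (proj1_sig y) = snd (proj1_sig x) ++ [i] \/ snd (proj1_sig x) = snd (proj1_sig y) ++ [i].

Lemma VF_eq : forall x y : VF, proj1_sig x = proj1_sig y -> x = y.
Proof.
  intros [x Hx] [y Hy]; simpl; intros; subst. f_equal. apply UIP_dec, bool_dec.
Qed.

Lemma EF_sym : forall x y, EF x y -> EF y x.
Proof. intros x y [H1 [i [H|H]]]; split; auto; exists i; auto. Qed.

Lemma EF_irrefl : forall x, ~ EF x x.
Proof.
  intros x [_ [i [H|H]]]; apply (f_equal (@length nat)) in H; rewrite length_app in H; simpl in H; lia.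
Qed.

Lemma walk_fst : forall x y k, walk EF x y k -> fst (proj1_sig x) = fst (proj1_sig y).
Proof. intros x y k H; induction H; auto. destruct H; congruence. Qed.

Lemma EF_len : forall x y, EF x y -> length (snd (proj1_sig y)) = S (length (snd (proj1_sig x))) \/
   length (snd (proj1_sig x)) = S (length (snd (proj1_sig y))).
Proof. intros x y [_ [i [H|H]]]; rewrite H, length_app; simpl; lia. Qed.

Lemma walk_len : forall x y k, walk EF x y k ->
  length (snd (proj1_sig y)) <= length (snd (proj1_sig x)) + k /\
  length (snd (proj1_sig x)) <= length (snd (proj1_sig y)) + k.
Proof. intros x y k H; induction H; [lia|]. destruct (EF_len _ _ H); lia. Qed.

Definition mk (c : nat) (p : list nat) : option VF :=
  match Sb c p as b return (Sb c p = b -> option VF) with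
  | true => fun H => Some (exist _ (c, p) H)
  | false => fun _ => None
  end eq_refl.

Lemma mk_some : forall c p, Sb c p = true -> exists y, mk c p = Some y /\ proj1_sig y = (c, p).
Proof.
  intros c p H. unfold mk. generalize (@eq_refl bool (Sb c p)).
  pattern (Sb c p) at 2 3. rewrite H. intros. eexists; split; reflexivity.
Qed.

Lemma mk_spec : forall c p y, mk c p = Some y -> proj1_sig y = (c, p).
Proof.
  intros c p y. unfold mk. generalize (@eq_refl bool (Sb c p)).
  pattern (Sb c p) at 2 3. destruct (Sb c p); intros; inversion H; auto.
Qed.
End Fam.
Arguments VF_eq {Sb}.
Arguments mk {Sb}.

Definition prefixb (a p : list nat) : bool :=
  if list_eq_dec Nat.eq_dec (firstn (length a) p) a then true else false.

Lemma prefixb_app : forall a s, prefixb a (a ++ s) = true.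
Proof.
  intros; unfold prefixb. rewrite firstn_app, Nat.sub_diag, firstn_all; simpl; rewrite app_nil_r.
  destruct list_eq_dec; congruence.
Qed.

Section PR.
Variables S1 S2 : nat -> list nat -> bool.
Variables (c c' : nat) (a a' : list nat).

Definition mapPR (T1 T2 : nat -> list nat -> bool) (c c' : nat) (a a' : list nat)
   (d : VF T2) (x : VF T1) : VF T2 :=
  let (c0, p) := proj1_sig x in
  if (c0 =? c) && prefixb a p then
    match @mk T2 c' (a' ++ skipn (length a) p) with Some y => y | None => d end
  else d.

Lemma mapPR_form : forall T1 T2 c c' a a' d x s'',
  proj1_sig x = (c, a ++ s'') -> T2 c' (a' ++ s'') = true ->
  proj1_sig (mapPR T1 T2 c c' a a' d x) = (c', a' ++ s'').
Proof.
  intros T1 T2 c0 c1 a0 a1 d x s'' Hx HT. unfold mapPR. rewrite Hx.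
  rewrite Nat.eqb_refl, prefixb_app. simpl.
  rewrite skipn_app, Nat.sub_diag, skipn_all; simpl.
  destruct (mk_some T2 _ _ HT) as [y [Hy Hy']]. rewrite Hy; auto.
Qed.

Lemma ball_form : forall T (c : nat) (a s : list nat) (Hv : T c (a ++ s) = true) r,
  (length s = r \/ a = []) -> length s <= r ->
  forall k x, k <= r -> walk (EF T) (exist _ (c, a ++ s) Hv) x k ->
  exists s'', proj1_sig x = (c, a ++ s'') /\ length s'' <= length s + k /\
    (a = [] \/ length s - k <= length s'').
Proof.
  intros T c0 a0 s Hv r Hr Hsr k. induction k; intros x Hk Hw.
  - apply walk_0 in Hw; subst. exists s; simpl; split; auto; split; auto; lia.
  - destruct (walk_last _ _ _ _ Hw) as [y [Hy HE]].
    destruct (IHk y ltac:(lia) Hy) as [sy [Hy1 [Hy2 Hy3]]].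
    destruct HE as [Hf [i [Hi|Hi]]]; rewrite Hy1 in Hf, Hi; simpl in Hf, Hi.
    + exists (sy ++ [i]). destruct (proj1_sig x) as [cx px]; simpl in *; subst.
      rewrite app_assoc; split; auto. rewrite length_app; simpl; split; [lia|]. destruct Hy3; auto; lia.
    + destruct (proj1_sig x) as [cx px] eqn:Ex; simpl in *; subst.
      destruct Hr as [Hr|Hr].
      * destruct Hy3 as [Ha|Hy3].
        -- subst a0; simpl in *. exists px; split; auto. rewrite Hi, length_app in Hy2; simpl in Hy2. split; [lia|auto].
        -- destruct (exists_last (l := sy)) as [s0 [j Hs0]].
           { intro; subst; simpl in *; lia. }
           subst sy. rewrite app_assoc in Hi. apply app_inj_tail in Hi. destruct Hi as [Hi _]. subst px.
           exists s0; split; auto. rewrite length_app in *; simpl in *. split; [lia|right; lia].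
      * subst a0; simpl in *. exists px; split; auto. rewrite Hi, length_app in Hy2; simpl in Hy2. split; [lia|auto].
Qed.

Lemma PR_lemma : forall (r : nat) (s : list nat)
  (Hv : S1 c (a ++ s) = true) (Hw : S2 c' (a' ++ s) = true),
  length s <= r -> (length s = r \/ (a = [] /\ a' = [])) ->
  (forall s', length s' <= 2 * r -> S1 c (a ++ s') = S2 c' (a' ++ s')) ->
  exists f g, f (exist _ (c, a ++ s) Hv) = exist _ (c', a' ++ s) Hw /\
    g (exist _ (c', a' ++ s) Hw) = exist _ (c, a ++ s) Hv /\
    LocIso (EF S1) (EF S2) (BallPt (EF S1) (exist _ (c, a ++ s) Hv) r)
                            (BallPt (EF S2) (exist _ (c', a' ++ s) Hw) r) f g.
Proof.
  intros r s Hv Hw Hsr Hr Hsh.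
  set (v := exist (fun x => S1 (fst x) (snd x) = true) (c, a ++ s) Hv).
  set (w := exist (fun x => S2 (fst x) (snd x) = true) (c', a' ++ s) Hw).
  set (f := mapPR S1 S2 c c' a a' w). set (g := mapPR S2 S1 c' c a' a v).
  assert (Hr1 : length s = r \/ a = []) by (destruct Hr as [H|[H _]]; auto).
  assert (Hr2 : length s = r \/ a' = []) by (destruct Hr as [H|[_ H]]; auto).
  assert (BF1 := ball_form S1 c a s Hv r Hr1 Hsr).
  assert (BF2 := ball_form S2 c' a' s Hw r Hr2 Hsr).
  assert (Fm1 : forall x k, k <= r -> walk (EF S1) v x k -> exists s'', proj1_sig x = (c, a ++ s'') /\
            length s'' <= 2 * r /\ proj1_sig (f x) = (c', a' ++ s'')).
  { intros x k Hk Hx. destruct (BF1 k x Hk Hx) as [s'' [H1 [H2 _]]]. exists s''. split; auto. split; [lia|].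
    apply mapPR_form; auto. rewrite <- Hsh; [|lia]. destruct x as [[cx px] Hpx]; simpl in *. inversion H1; subst; auto. }
  assert (Fm2 : forall x k, k <= r -> walk (EF S2) w x k -> exists s'', proj1_sig x = (c', a' ++ s'') /\
            length s'' <= 2 * r /\ proj1_sig (g x) = (c, a ++ s'')).
  { intros x k Hk Hx. destruct (BF2 k x Hk Hx) as [s'' [H1 [H2 _]]]. exists s''. split; auto. split; [lia|].
    apply mapPR_form; auto. rewrite Hsh; [|lia]. destruct x as [[cx px] Hpx]; simpl in *. inversion H1; subst; auto. }
  assert (Adj : forall T1 T2 x y c0 c1 b b' sx sy, proj1_sig x = (c0, b ++ sx) -> proj1_sig y = (c0, b ++ sy) ->
     forall (x' : VF T2) y', proj1_sig x' = (c1, b' ++ sx) -> proj1_sig y' = (c1, b' ++ sy) ->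
     EF T1 x y -> EF T2 x' y').
  { intros T1 T2 x y c0 c1 b b' sx sy Hx Hy x' y' Hx' Hy' [_ [i Hi]].
    unfold EF; rewrite Hx, Hy, Hx', Hy' in *; simpl in *. split; auto. exists i.
    destruct Hi as [Hi|Hi]; [left|right]; rewrite <- app_assoc in Hi; apply app_inv_head in Hi; rewrite Hi, app_assoc; auto. }
  assert (Tr1 : forall k x, k <= r -> walk (EF S1) v x k -> walk (EF S2) w (f x) k).
  { induction k; intros x Hk Hx.
    - apply walk_0 in Hx; subst x. replace (f v) with w; [constructor|].
      apply VF_eq. symmetry. apply mapPR_form; auto.
    - destruct (walk_last _ _ _ _ Hx) as [y [Hy HE]]. apply walk_snoc with (f y); [apply IHk; auto; lia|].
      destruct (Fm1 x _ Hk Hx) as [sx [Hx1 [_ Hx2]]]. destruct (Fm1 y k ltac:(lia) Hy) as [sy [Hy1 [_ Hy2]]].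
      exact (Adj S1 S2 y x c c' a a' sy sx Hy1 Hx1 (f y) (f x) Hy2 Hx2 HE). }
  assert (Tr2 : forall k x, k <= r -> walk (EF S2) w x k -> walk (EF S1) v (g x) k).
  { induction k; intros x Hk Hx.
    - apply walk_0 in Hx; subst x. replace (g w) with v; [constructor|].
      apply VF_eq. symmetry. apply mapPR_form; auto.
    - destruct (walk_last _ _ _ _ Hx) as [y [Hy HE]]. apply walk_snoc with (g y); [apply IHk; auto; lia|].
      destruct (Fm2 x _ Hk Hx) as [sx [Hx1 [_ Hx2]]]. destruct (Fm2 y k ltac:(lia) Hy) as [sy [Hy1 [_ Hy2]]].
      exact (Adj S2 S1 y x c' c a' a sy sx Hy1 Hx1 (g y) (g x) Hy2 Hx2 HE). }
  exists f, g. split; [|split].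
  - apply VF_eq. apply mapPR_form; auto.
  - apply VF_eq. apply mapPR_form; auto.
  - split; [|split].
    + intros x [k [Hk Hx]]. split. exists k; split; auto.
      destruct (Fm1 x _ Hk Hx) as [sx [Hx1 [Hl Hx2]]]. apply VF_eq. rewrite Hx1.
      apply mapPR_form; auto. destruct x as [[cx px] Hpx]; simpl in *. inversion Hx1; subst; auto.
    + intros x [k [Hk Hx]]. split. exists k; split; auto.
      destruct (Fm2 x _ Hk Hx) as [sx [Hx1 [Hl Hx2]]]. apply VF_eq. rewrite Hx1.
      apply mapPR_form; auto. destruct x as [[cx px] Hpx]; simpl in *. inversion Hx1; subst; auto.
    + intros x y [k [Hk Hx]] [k' [Hk' Hy]].
      destruct (Fm1 x _ Hk Hx) as [sx [Hx1 [_ Hx2]]]. destruct (Fm1 y _ Hk' Hy) as [sy [Hy1 [_ Hy2]]].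
      split; intro HE.
      * exact (Adj S1 S2 x y c c' a a' sx sy Hx1 Hy1 (f x) (f y) Hx2 Hy2 HE).
      * exact (Adj S2 S1 (f x) (f y) c' c a' a sx sy Hx2 Hy2 x y Hx1 Hy1 HE).
Qed.
End PR.

Lemma rich_of : forall S1 S2 r,
  (forall c p (H : S1 c p = true) (l2 : list (VF S2)), exists c' a a' s,
     p = a ++ s /\ (forall u, In u l2 -> fst (proj1_sig u) <> c') /\ length s <= r /\
     (length s = r \/ (a = [] /\ a' = [])) /\
     (forall s', length s' <= 2 * r -> S1 c (a ++ s') = S2 c' (a' ++ s'))) ->
  Rich (EF S1) (EF S2) r.
Proof.
  intros S1 S2 r Hyp [[c p] H] l2. simpl in H.
  destruct (Hyp c p H l2) as [c' [a [a' [s [Hp [Hfr [Hs [Hr Hsh]]]]]]]]. subst p.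
  assert (Hw : S2 c' (a' ++ s) = true) by (rewrite <- Hsh; auto; lia).
  destruct (PR_lemma S1 S2 c c' a a' r s H Hw Hs Hr Hsh) as [f [g [H1 [H2 H3]]]].
  exists (exist _ (c', a' ++ s) Hw), f, g. split; [|split]; auto. split; auto.
  intros u x k k' Hu Hux Hvx. apply walk_fst in Hux. apply walk_fst in Hvx. simpl in Hvx.
  apply (Hfr u Hu). congruence.
Qed.

Definition fb2 (s : list nat) : bool := forallb (fun j => j <? 2) s.
Definition fz (s : list nat) : bool := forallb (Nat.eqb 0) s.
Definition Tq (q : nat) (p : list nat) : bool :=
  match p with [] => true | i :: s => (i <? q) && fb2 s end.
Fixpoint num (b : list nat) : nat := match b with [] => 0 | i :: s => i + 4 * num s end.
Definition RR (rho : nat) := 2 * rho + 2.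
Definition base (rho : nat) := 2 * rho + 1.
Definition Lc (rho c : nat) (b : list nat) : nat := base rho + num b + 4 ^ RR rho * c.
Definition Kq (rho q c : nat) (p : list nat) : bool :=
  Tq q p && ((length p <=? RR rho) ||
             (fz (skipn (RR rho) p) && (length p - RR rho <=? Lc rho c (firstn (RR rho) p)))).
Definition SN (rho c : nat) : list nat -> bool := if Nat.even c then Kq rho 4 c else Kq rho 3 c.
Definition SM (rho c : nat) : list nat -> bool := if Nat.even c then Tq 4 else Kq rho 3 c.
Definition Sfam (rho : nat) (isN : bool) : nat -> list nat -> bool := if isN then SN rho else SM rho.

Lemma Tq_app : forall q a s, a <> [] -> Tq q (a ++ s) = Tq q a && fb2 s.
Proof.
  intros q [|i a] s H; [congruence|]. simpl. unfold fb2. rewrite forallb_app. apply andb_assoc.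
Qed.

Lemma fz_fb2 : forall s, fz s = true -> fb2 s = true.
Proof.
  induction s; simpl; auto. intro H; apply andb_true_iff in H; destruct H as [H1 H2].
  destruct a; [|discriminate]. simpl. auto.
Qed.

Lemma fz_repeat : forall n, fz (repeat 0 n) = true.
Proof. induction n; simpl; auto. Qed.
Lemma fb2_repeat : forall n, fb2 (repeat 0 n) = true.
Proof. intros; apply fz_fb2, fz_repeat. Qed.
Lemma Tq_repeat : forall q n, 0 < q -> Tq q (repeat 0 n) = true.
Proof. intros q [|n] Hq; simpl; auto. rewrite fb2_repeat. destruct q; [lia|]; auto. Qed.

Lemma Tq_lt4 : forall q p, q <= 4 -> Tq q p = true -> forall i, In i p -> i < 4.
Proof.
  intros q [|j p] Hq H i Hi; simpl in *; [tauto|]. apply andb_true_iff in H; destruct H as [H1 H2].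
  apply Nat.ltb_lt in H1. destruct Hi; [lia|]. unfold fb2 in H2. rewrite forallb_forall in H2.
  apply H2 in H. apply Nat.ltb_lt in H. lia.
Qed.

Lemma num_lt : forall b, (forall i, In i b -> i < 4) -> num b < 4 ^ length b.
Proof.
  induction b; simpl; intros; auto. assert (a < 4) by auto. assert (num b < 4 ^ length b) by auto. lia.
Qed.

Lemma Kq_short : forall rho q c p, length p <= RR rho -> Kq rho q c p = Tq q p.
Proof.
  intros. unfold Kq. apply Nat.leb_le in H. rewrite H. simpl. apply andb_true_r.
Qed.

Lemma Sfam_short : forall rho b c p, length p <= RR rho ->
  Sfam rho b c p = Tq (if Nat.even c then 4 else 3) p.
Proof.
  intros. unfold Sfam, SN, SM. destruct b; cbv beta; destruct (Nat.even c); rewrite ?Kq_short; auto.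
Qed.

Lemma Sfam_odd : forall rho b c, Nat.even c = false -> Sfam rho b c = Kq rho 3 c.
Proof. intros. unfold Sfam, SN, SM. destruct b; cbv beta; rewrite H; auto. Qed.

Lemma Sfam_cases : forall rho b c, (Sfam rho b c = Tq 4) \/ (exists q, 3 <= q <= 4 /\ Sfam rho b c = Kq rho q c).
Proof.
  intros. unfold Sfam, SN, SM. destruct b; cbv beta; destruct (Nat.even c);
  first [left; reflexivity | right; exists 4; split; [lia|reflexivity] | right; exists 3; split; [lia|reflexivity]].
Qed.

Lemma skipn_app_le : forall {A} n (a s : list A), length a <= n -> skipn n (a ++ s) = skipn (n - length a) s.
Proof. intros. rewrite skipn_app. rewrite skipn_all2 by lia. auto. Qed.
Lemma firstn_app_ge : forall {A} n (a s : list A), n <= length a -> firstn n (a ++ s) = firstn n a.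
Proof. intros. rewrite firstn_app. replace (n - length a) with 0 by lia. simpl; apply app_nil_r. Qed.
Lemma skipn_app_ge : forall {A} n (a s : list A), n <= length a -> skipn n (a ++ s) = skipn n a ++ s.
Proof. intros. rewrite skipn_app. replace (n - length a) with 0 by lia. auto. Qed.

Lemma skipn_repeat' : forall {A} (x : A) n m, skipn n (repeat x m) = repeat x (m - n).
Proof. intros A x n; induction n; intros [|m]; simpl; auto. Qed.
Lemma firstn_repeat' : forall {A} (x : A) n m, n <= m -> firstn n (repeat x m) = repeat x n.
Proof. intros A x n; induction n; intros [|m] H; simpl; auto; try lia. rewrite IHn; auto; lia. Qed.
Lemma num_repeat : forall n, num (repeat 0 n) = 0.
Proof. induction n; simpl; auto; lia. Qed.
Lemma in_firstn' : forall {A} (x : A) n l, In x (firstn n l) -> In x l.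
Proof. intros. rewrite <- (firstn_skipn n l). apply in_or_app; auto. Qed.
Lemma sum_ge : forall l x, In x l -> x <= fold_right plus 0 l.
Proof. induction l; simpl; intros; [tauto|]. destruct H; subst; [lia|]. apply IHl in H; lia. Qed.

Lemma Tq_pre : forall q a s, a <> [] -> Tq q (a ++ s) = true -> Tq q a = true.
Proof. intros. rewrite Tq_app in H0; auto. apply andb_true_iff in H0; tauto. Qed.

Lemma Kq_mid : forall rho q c a s', Tq q a = true -> a <> [] -> length a <= RR rho ->
  length s' <= 2 * rho ->
  Kq rho q c (a ++ s') = fb2 s' && ((length a + length s' <=? RR rho) || fz (skipn (RR rho - length a) s')).
Proof.
  intros. unfold Kq. rewrite Tq_app, H; auto. simpl. rewrite length_app, skipn_app_le; auto.
  f_equal. f_equal. replace (length a + length s' - RR rho <=? Lc rho c (firstn (RR rho) (a ++ s'))) with true.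
  apply andb_true_r. symmetry; apply Nat.leb_le. unfold Lc, base, RR in *. lia.
Qed.

Lemma Kq_deep : forall rho q c a s', Tq q a = true -> a <> [] -> RR rho < length a ->
  Kq rho q c (a ++ s') = fz (skipn (RR rho) a) && fz s' &&
     (length a - RR rho + length s' <=? Lc rho c (firstn (RR rho) a)).
Proof.
  intros. unfold Kq. rewrite Tq_app, H; auto. simpl. rewrite length_app.
  replace (length a + length s' <=? RR rho) with false by (symmetry; apply Nat.leb_gt; lia).
  simpl. rewrite skipn_app_ge, firstn_app_ge by lia. unfold fz at 1. rewrite forallb_app. fold (fz (skipn (RR rho) a)). fold (fz s').
  replace (length a + length s' - RR rho) with (length a - RR rho + length s') by lia.
  destruct (fz s') eqn:E.
  - rewrite fz_fb2; auto.
  - destruct (fb2 s'), (fz (skipn (RR rho) a)); simpl; auto.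
Qed.

Theorem rich_fam : forall rho r b1 b2, r <= rho -> Rich (EF (Sfam rho b1)) (EF (Sfam rho b2)) r.
Proof.
  intros rho r b1 b2 Hr. apply rich_of. intros c p H l2.
  set (M := c + fold_right plus 0 (map (fun u => fst (proj1_sig u)) l2) + 1).
  assert (HM : forall u, In u l2 -> fst (proj1_sig u) < M).
  { intros u Hu. unfold M. pose proof (sum_ge (map (fun u => fst (proj1_sig u)) l2) (fst (proj1_sig u))).
    pose proof (in_map (fun u : VF (Sfam rho b2) => fst (proj1_sig u)) l2 u Hu) as H1. specialize (H0 H1). lia. }
  destruct (le_lt_dec (length p) r) as [Ht|Ht].
  -
    exists ((if Nat.even c then 0 else 1) + 2 * M), [], [], p. split; [auto|]. split.
    { intros u Hu; specialize (HM u Hu); destruct (Nat.even c); lia. }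
    split; [auto|]. split; [right; auto|].
    intros s' Hs'. cbn [app]. rewrite !Sfam_short by (unfold RR; lia). rewrite Nat.even_add_mul_2.
    destruct (Nat.even c); auto.
  - set (a := firstn (length p - r) p). set (s := skipn (length p - r) p).
    assert (Hp : p = a ++ s) by (symmetry; apply firstn_skipn).
    assert (Hs : length s = r) by (unfold s; rewrite length_skipn; lia).
    assert (Ha : length a = length p - r) by (unfold a; rewrite length_firstn; lia).
    assert (Hane : a <> []) by (intro E; rewrite E in Ha; simpl in Ha; lia).
    assert (Hodd : Nat.even (1 + 2 * M) = false) by (rewrite Nat.even_add_mul_2; auto).
    assert (Hfr : forall u, In u l2 -> fst (proj1_sig u) <> 1 + 2 * M) by (intros u Hu; specialize (HM u Hu); lia).
    rewrite Hp in H.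
    destruct (Sfam_cases rho b1 c) as [HT|[q [Hq HK]]].
    + exists (1 + 2 * M), a, [0], s. split; [auto|]. split; [auto|]. split; [lia|]. split; [left; auto|].
      intros s' Hs'. rewrite HT, Sfam_odd by auto. rewrite HT in H.
      rewrite Kq_short by (simpl; unfold RR; lia). rewrite Tq_app by auto. rewrite (Tq_pre 4 a s); auto.
    + rewrite HK in H. assert (Hqa : Tq q a = true) by (eapply Tq_pre; eauto; apply andb_true_iff in H; destruct H; eauto).
      destruct (le_lt_dec (length a) (RR rho)) as [Hal|Hal].
      * exists (1 + 2 * M), a, (repeat 0 (length a)), s. split; [auto|]. split; [auto|]. split; [lia|]. split; [left; auto|].
        intros s' Hs'. rewrite HK, Sfam_odd by auto.
        rewrite Kq_mid by (auto; lia).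
        rewrite Kq_mid; [|apply Tq_repeat; lia| |rewrite repeat_length; lia|lia].
        rewrite repeat_length; auto.
        destruct (length a); simpl in *; [lia|discriminate].
      * set (R := RR rho) in *. set (L := Lc rho c (firstn R a)).
        set (L' := Lc rho (1 + 2 * M) (repeat 0 R)).
        set (m := length a - R).
        assert (HLL : L <= L').
        { unfold L, L', Lc. rewrite num_repeat.
          assert (num (firstn R a) < 4 ^ R).
          { replace R with (length (firstn R a)) at 2 by (rewrite length_firstn; lia).
            apply num_lt. intros i Hi. apply in_firstn' in Hi. eapply Tq_lt4 with (q := q); eauto; lia. }
          assert (c < M) by (unfold M; lia). set (P := 4 ^ R) in *. change (4 ^ RR rho) with P.
          assert (P * c + P <= P * (1 + 2 * M)) by nia. lia. }
        assert (HmL : m <= L).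
        { unfold Kq in H. apply andb_true_iff in H. destruct H as [_ H].
          apply orb_true_iff in H. rewrite length_app in H. destruct H as [H|H].
          - apply Nat.leb_le in H; lia.
          - apply andb_true_iff in H; destruct H as [_ H]. apply Nat.leb_le in H.
            fold R in H. rewrite firstn_app_ge in H by lia. fold L in H. unfold m; lia. }
        assert (Hm1 : 1 <= m) by (unfold m; lia).
        exists (1 + 2 * M), a, (repeat 0 (R + (L' - L + m))), s. split; [auto|]. split; [auto|]. split; [lia|]. split; [left; auto|].
        intros s' Hs'. rewrite HK, Sfam_odd by auto.
        rewrite Kq_deep by (auto; lia).
        rewrite Kq_deep; [|apply Tq_repeat; lia| |rewrite repeat_length; lia].
        2:{ destruct (R + (L' - L + m)) eqn:E; simpl; [lia|discriminate]. }
        fold R. rewrite skipn_repeat', firstn_repeat', fz_repeat by lia. fold L'.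
        assert (Hz : fz (skipn R a) = true).
        { unfold Kq in H. apply andb_true_iff in H. destruct H as [_ H].
          apply orb_true_iff in H. rewrite length_app in H. destruct H as [H|H].
          - apply Nat.leb_le in H; lia.
          - apply andb_true_iff in H; destruct H as [H _]. fold R in H. rewrite skipn_app_ge in H by lia.
            unfold fz in H. rewrite forallb_app in H. apply andb_true_iff in H; tauto. }
        rewrite Hz, repeat_length. simpl. fold L. f_equal.
        destruct (Nat.leb_spec (length a - R + length s') L); destruct (Nat.leb_spec (R + (L' - L + m) - R + length s') L'); auto; exfalso; unfold m in *; lia.
Qed.

Lemma has_degree_unique : forall {V} (E : V -> V -> Prop) x n m,
  has_degree E x n -> has_degree E x m -> n = m.
Proof.
  intros V E x n m [l [Hl [Hn Hx]]] [l' [Hl' [Hm Hx']]].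
  assert (length l <= length l') by (apply NoDup_incl_length; auto; intros y Hy; apply Hx', Hx; auto).
  assert (length l' <= length l) by (apply NoDup_incl_length; auto; intros y Hy; apply Hx, Hx'; auto).
  lia.
Qed.

Section Auto.
Context {V : Type} (E : V -> V -> Prop) (f g : V -> V).
Hypothesis Hgf : forall x, g (f x) = x.
Hypothesis Hfg : forall x, f (g x) = x.
Hypothesis HE : forall x y, E x y <-> E (f x) (f y).

Lemma autE_inv : forall x y, E x y <-> E (g x) (g y).
Proof. intros. rewrite (HE (g x) (g y)), !Hfg. tauto. Qed.

Lemma aut_walk : forall x z k, walk E x z k -> walk E (f x) (f z) k.
Proof. intros x z k H; induction H; [constructor|]. apply walk_cons with (f y); [apply (proj1 (HE x y)); auto|auto]. Qed.

Lemma aut_walk_inv : forall x z k, walk E x z k -> walk E (g x) (g z) k.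
Proof. intros x z k H; induction H; [constructor|]. apply walk_cons with (g y); [apply (proj1 (autE_inv x y)); auto|auto]. Qed.

Lemma aut_degree : forall x n, has_degree E x n -> has_degree E (f x) n.
Proof.
  intros x n [l [Hl [Hn Hx]]]. exists (map f l). split; [|split].
  - apply FinFun.Injective_map_NoDup; auto. intros a b Hab. rewrite <- (Hgf a), <- (Hgf b), Hab; auto.
  - rewrite length_map; auto.
  - intro y. split; intro H.
    + rewrite <- (Hfg y) in H. apply (proj2 (HE x (g y))) in H. apply Hx in H.
      rewrite <- (Hfg y). apply in_map; auto.
    + apply in_map_iff in H. destruct H as [z [Hz Hz']]. subst y. apply (proj1 (HE x z)). apply Hx; auto.
Qed.

Lemma aut_degree_inv : forall x n, has_degree E x n -> has_degree E (g x) n.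
Proof.
  intros x n [l [Hl [Hn Hx]]]. exists (map g l). split; [|split].
  - apply FinFun.Injective_map_NoDup; auto. intros a b Hab. rewrite <- (Hfg a), <- (Hfg b), Hab; auto.
  - rewrite length_map; auto.
  - intro y. split; intro H.
    + rewrite <- (Hgf y) in H. apply (proj2 (autE_inv x (f y))) in H. apply Hx in H.
      rewrite <- (Hgf y). apply in_map; auto.
    + apply in_map_iff in H. destruct H as [z [Hz Hz']]. subst y. apply (proj1 (autE_inv x z)). apply Hx; auto.
Qed.
End Auto.

Section FamDeg.
Variable Sb : nat -> list nat -> bool.
Hypothesis Hpc : forall c p i, Sb c (p ++ [i]) = true -> Sb c p = true.
Hypothesis H4 : forall c p i, Sb c (p ++ [i]) = true -> i < 4.

Definition optl {A} (o : option A) : list A := match o with Some y => [y] | None => [] end.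

Definition kidsL (c : nat) (p : list nat) (is : list nat) : list (VF Sb) :=
  flat_map (fun i => optl (mk c (p ++ [i]))) is.

Lemma kidsL_in : forall c p is y, In y (kidsL c p is) <-> exists i, In i is /\ mk c (p ++ [i]) = Some y.
Proof.
  intros. unfold kidsL. rewrite in_flat_map. split.
  - intros [i [Hi Hy]]. exists i; split; auto. destruct (mk c (p ++ [i])); simpl in Hy; [|tauto].
    destruct Hy; [subst|tauto]; auto.
  - intros [i [Hi Hy]]. exists i; split; auto. rewrite Hy; simpl; auto.
Qed.

Lemma kidsL_nodup : forall c p is, NoDup is -> NoDup (kidsL c p is).
Proof.
  intros c p is H; induction H; simpl; [constructor|].
  destruct (mk c (p ++ [x])) eqn:E; simpl; auto. constructor; auto.
  intro Hin. apply kidsL_in in Hin. destruct Hin as [i [Hi Hi']].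
  apply mk_spec in E, Hi'. rewrite E in Hi'. inversion Hi'. apply app_inj_tail in H2. destruct H2; subst; auto.
Qed.

Lemma kidsL_len : forall c p is, length (kidsL c p is) = length (filter (fun i => Sb c (p ++ [i])) is).
Proof.
  intros c p is; induction is; simpl; auto. unfold kidsL in *. simpl.
  destruct (Sb c (p ++ [a])) eqn:E.
  - destruct (mk_some Sb c _ E) as [y [Hy _]]. rewrite Hy. simpl. rewrite IHis; auto.
  - unfold mk. generalize (@eq_refl bool (Sb c (p ++ [a]))). pattern (Sb c (p ++ [a])) at 2 3. rewrite E.
    intros. simpl. auto.
Qed.

Definition parL (c : nat) (p : list nat) : list (VF Sb) :=
  match p with [] => [] | _ => optl (mk c (removelast p)) end.

Definition nbl (x : VF Sb) : list (VF Sb) :=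
  parL (fst (proj1_sig x)) (snd (proj1_sig x)) ++ kidsL (fst (proj1_sig x)) (snd (proj1_sig x)) [0;1;2;3].

Definition deg_val (c : nat) (p : list nat) : nat :=
  (match p with [] => 0 | _ => 1 end) + length (filter (fun i => Sb c (p ++ [i])) [0;1;2;3]).

Lemma fam_degree : forall x, has_degree (EF Sb) x (deg_val (fst (proj1_sig x)) (snd (proj1_sig x))).
Proof.
  intros [[c p] Hx]; simpl in *. exists (nbl (exist _ (c, p) Hx)). unfold nbl; cbn [fst snd proj1_sig].
  assert (Hpar : forall y, In y (parL c p) <-> (p <> [] /\ proj1_sig y = (c, removelast p))).
  { intros y. unfold parL. destruct p as [|j p'] eqn:Ep; [simpl; split; [tauto|intros [H _]; congruence]|].
    cbv iota beta. rewrite <- Ep in Hx |- *. destruct (exists_last (l := p)) as [p0 [k Hp0]]; [subst; discriminate|].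
    assert (Hm : Sb c p0 = true) by (apply (Hpc c p0 k); rewrite <- Hp0; auto).
    destruct (mk_some Sb c p0 Hm) as [z [Hz Hz']]. rewrite Hp0, removelast_last, Hz. cbn [optl In].
    split; [intros [H|H]; [split; [intro E; rewrite E in Hp0; destruct p0; discriminate|rewrite <- H; auto]|tauto]|].
    intros [_ H]. left. apply VF_eq. congruence. }
  split; [|split].
  - apply NoDup_app; [| |].
    + unfold parL; destruct p; [constructor|]. cbv iota beta.
      match goal with |- NoDup (optl ?o) => destruct o end; simpl; repeat constructor; auto.
    + apply kidsL_nodup. repeat constructor; simpl; lia.
    + intros y Hy Hy'. apply Hpar in Hy. apply kidsL_in in Hy'. destruct Hy' as [i [_ Hi]].
      apply mk_spec in Hi. destruct Hy as [Hne Hy]. rewrite Hy in Hi. inversion Hi.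
      match goal with H : removelast p = p ++ [i] |- _ => rename H into H1 end.
      apply (f_equal (@length nat)) in H1.
      destruct (exists_last (l := p)) as [p0 [k Hp0]]; [auto|]. rewrite Hp0, removelast_last in H1.
      rewrite !length_app in H1; simpl in H1; lia.
  - rewrite length_app, kidsL_len. unfold deg_val, parL; destruct p as [|j p']; [reflexivity|]. cbv iota beta.
    assert (length (optl (@mk Sb c (removelast (j :: p')))) = 1) as ->; [|reflexivity].
    destruct (exists_last (l := j :: p')) as [p0 [k Hp0]]; [discriminate|]. rewrite Hp0, removelast_last.
    assert (Hm : Sb c p0 = true) by (apply (Hpc c p0 k); rewrite <- Hp0; auto).
    destruct (mk_some Sb c p0 Hm) as [z [Hz Hz']]. rewrite Hz; auto.
  - intros [[cy py] Hy]. unfold EF; cbn [fst snd proj1_sig]. cbn [fst snd] in Hy. rewrite in_app_iff, Hpar, kidsL_in. cbn [fst snd proj1_sig]. split.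
    + intros [Hc [i [Hi|Hi]]]; subst cy.
      * subst py. right. exists i. split; [pose proof (H4 _ _ _ Hy); simpl; lia|].
        destruct (mk_some Sb c _ Hy) as [z [Hz Hz']]. rewrite Hz. f_equal. apply VF_eq. simpl. auto.
      * subst p. left. split; [destruct py; discriminate|]. rewrite removelast_last. auto.
    + intros [[Hne H]|[i [Hi Hmk]]].
      * inversion H; subst cy py. split; auto. destruct (exists_last (l := p)) as [p0 [k Hp0]]; auto.
        exists k; right. rewrite Hp0, removelast_last; auto.
      * apply mk_spec in Hmk. simpl in Hmk. inversion Hmk; subst cy py. split; auto. exists i; left; auto.
Qed.

Lemma pc_app : forall c a s, Sb c (a ++ s) = true -> Sb c a = true.
Proof.
  intros c a s. revert a. induction s using rev_ind; intros a H; [rewrite app_nil_r in H; auto|].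
  apply IHs. apply (Hpc c _ x). rewrite <- app_assoc; auto.
Qed.

Lemma walk_up : forall c a s (Hx : Sb c (a ++ s) = true) (Ha : Sb c a = true),
  walk (EF Sb) (exist _ (c, a ++ s) Hx) (exist _ (c, a) Ha) (length s).
Proof.
  intros c a s. revert a. induction s using rev_ind; intros a Hx Ha.
  - simpl. replace (exist (fun x => Sb (fst x) (snd x) = true) (c, a ++ []) Hx) with
      (exist (fun x => Sb (fst x) (snd x) = true) (c, a) Ha); [constructor|]. apply VF_eq; simpl; rewrite app_nil_r; auto.
  - assert (Hm : Sb c (a ++ s) = true) by (apply (Hpc c _ x); rewrite <- app_assoc; auto).
    rewrite length_app; simpl. rewrite Nat.add_comm; simpl.
    econstructor; [|apply (IHs a Hm Ha)]. split; simpl; auto. exists x; right. rewrite app_assoc; auto.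
Qed.
End FamDeg.

Lemma chain_nth : forall {V} (E : V -> V -> Prop) l, chain E l -> forall i d, S i < length l ->
  E (nth i l d) (nth (S i) l d).
Proof.
  intros V E l; induction l as [|a l IH]; simpl; intros H i d Hi; [lia|].
  destruct l as [|b l]; simpl in *; [lia|]. destruct H as [H1 H2]. destruct i; auto.
  apply (IH H2 i d); simpl; lia.
Qed.

Lemma nth_last : forall {V} (l : list V) x d, nth (length l) (x :: l) d = last l x.
Proof. intros V l; induction l; intros; simpl; auto. destruct l; simpl in *; auto. Qed.

Lemma exists_max : forall (F : nat -> nat) m, 0 < m -> exists i, i < m /\ forall j, j < m -> F j <= F i.
Proof.
  intros F m; induction m; intros H; [lia|]. destruct m.
  - exists 0; split; auto; intros; assert (j = 0) by lia; subst; auto.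
  - destruct IHm as [i [Hi Hj]]; [lia|]. destruct (le_lt_dec (F (S m)) (F i)).
    + exists i; split; [lia|]. intros j Hj'. destruct (Nat.eq_dec j (S m)); subst; auto. apply Hj; lia.
    + exists (S m); split; [lia|]. intros j Hj'. destruct (Nat.eq_dec j (S m)); subst; auto. specialize (Hj j ltac:(lia)); lia.
Qed.

Lemma fam_acyclic : forall Sb, ~ has_cycle (EF Sb).
Proof.
  intros Sb [x [l [Hnd [Hl [Hch Hcl]]]]].
  set (cyc := x :: l). set (m := length cyc).
  assert (Hm : m = S (length l)) by auto.
  set (D := fun j => length (snd (proj1_sig (nth j cyc x)))).
  destruct (exists_max D m ltac:(lia)) as [i [Hi Hmax]].
  assert (Adj : forall j, j < m -> EF Sb (nth j cyc x) (nth (if Nat.eq_dec j (m - 1) then 0 else S j) cyc x)).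
  { intros j Hj. destruct (Nat.eq_dec j (m - 1)).
    - subst j. replace (m - 1) with (length l) by lia. unfold cyc. rewrite nth_last. simpl. auto.
    - apply chain_nth; auto. fold cyc. lia. }
  set (ip := if Nat.eq_dec i 0 then m - 1 else i - 1).
  set (jn := if Nat.eq_dec i (m - 1) then 0 else S i).
  assert (Hip : ip < m) by (unfold ip; destruct (Nat.eq_dec i 0); lia).
  assert (Hjn : jn < m) by (unfold jn; destruct (Nat.eq_dec i (m - 1)); lia).
  assert (A1 : EF Sb (nth ip cyc x) (nth i cyc x)).
  { pose proof (Adj ip Hip) as H. unfold ip in *. destruct (Nat.eq_dec i 0).
    - subst i. destruct (Nat.eq_dec (m - 1) (m - 1)); [auto|lia].
    - destruct (Nat.eq_dec (i - 1) (m - 1)); [lia|]. replace (S (i - 1)) with i in H by lia. auto. }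
  assert (A2 : EF Sb (nth i cyc x) (nth jn cyc x)) by (apply Adj; auto).
  assert (Par : forall u, EF Sb u (nth i cyc x) \/ EF Sb (nth i cyc x) u -> D i >= length (snd (proj1_sig u)) ->
     fst (proj1_sig u) = fst (proj1_sig (nth i cyc x)) /\ exists k, snd (proj1_sig (nth i cyc x)) = snd (proj1_sig u) ++ [k]).
  { intros u Hu HD. unfold D in HD.
    destruct Hu as [[Hf [k [Hk|Hk]]]|[Hf [k [Hk|Hk]]]].
    - split; auto; exists k; auto.
    - rewrite Hk, length_app in HD; simpl in HD; lia.
    - rewrite Hk, length_app in HD; simpl in HD; lia.
    - split; auto; exists k; auto. }
  destruct (Par (nth ip cyc x)) as [F1 [k1 K1]]; [left; auto|apply Hmax; auto|].
  destruct (Par (nth jn cyc x)) as [F2 [k2 K2]]; [right; auto|apply Hmax; auto|].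
  rewrite K1 in K2. apply app_inj_tail in K2. destruct K2 as [K2 _].
  assert (Heq : nth ip cyc x = nth jn cyc x).
  { apply VF_eq. destruct (proj1_sig (nth ip cyc x)), (proj1_sig (nth jn cyc x)); simpl in *; congruence. }
  apply (proj1 (NoDup_nth cyc x)) in Heq; auto.
  unfold ip, jn in Heq. destruct (Nat.eq_dec i 0), (Nat.eq_dec i (m - 1)); lia.
Qed.

Section Conc.
Variable rho : nat.
Notation R := (RR rho).

Lemma R_ge2 : 2 <= R.
Proof. unfold RR; lia. Qed.

Lemma Tq_pc : forall q p i, Tq q (p ++ [i]) = true -> Tq q p = true.
Proof.
  intros q [|j p] i H; auto. rewrite Tq_app in H by discriminate. apply andb_true_iff in H; tauto.
Qed.

Lemma Kq_pc : forall q c p i, Kq rho q c (p ++ [i]) = true -> Kq rho q c p = true.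
Proof.
  intros q c p i H. unfold Kq in *. apply andb_true_iff in H. destruct H as [H1 H2].
  apply andb_true_iff; split; [eapply Tq_pc; eauto|].
  destruct (le_lt_dec (length p) R) as [Hl|Hl]; [apply orb_true_iff; left; apply Nat.leb_le; auto|].
  apply orb_true_iff in H2. rewrite length_app in H2; simpl in H2. destruct H2 as [H2|H2]; [apply Nat.leb_le in H2; lia|].
  apply andb_true_iff in H2. destruct H2 as [H2 H3]. rewrite skipn_app_ge in H2 by lia.
  rewrite firstn_app_ge in H3 by lia. apply orb_true_iff; right. unfold fz in H2. rewrite forallb_app in H2.
  apply andb_true_iff in H2. apply andb_true_iff; split; [tauto|]. apply Nat.leb_le in H3; apply Nat.leb_le; lia.
Qed.

Lemma Sfam_pc : forall b c p i, Sfam rho b c (p ++ [i]) = true -> Sfam rho b c p = true.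
Proof.
  intros b c p i. destruct (Sfam_cases rho b c) as [H|[q [_ H]]]; rewrite H; [apply Tq_pc|apply Kq_pc].
Qed.

Lemma Kq_Tq : forall q c p, Kq rho q c p = true -> Tq q p = true.
Proof. unfold Kq; intros; apply andb_true_iff in H; tauto. Qed.

Lemma Sfam_4 : forall b c p i, Sfam rho b c (p ++ [i]) = true -> i < 4.
Proof.
  intros b c p i H. assert (Hin : In i (p ++ [i])) by (apply in_or_app; simpl; auto).
  destruct (Sfam_cases rho b c) as [E|[q [Hq E]]]; rewrite E in H.
  - apply (Tq_lt4 4 (p ++ [i])); auto.
  - apply Kq_Tq in H. apply (Tq_lt4 q (p ++ [i])); auto; lia.
Qed.

Lemma root_mem : forall b c, Sfam rho b c [] = true.
Proof.
  intros b c. destruct (Sfam_cases rho b c) as [E|[q [Hq E]]]; rewrite E; auto.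
Qed.

Definition rootV (b : bool) (c : nat) : VF (Sfam rho b) := exist _ (c, []) (root_mem b c).

Lemma filt_le2 : forall f : nat -> bool, f 2 = false -> f 3 = false -> length (filter f [0;1;2;3]) <= 2.
Proof. intros f H2 H3. simpl. rewrite H2, H3. destruct (f 0), (f 1); simpl; lia. Qed.

Lemma filt_le1 : forall f : nat -> bool, f 1 = false -> f 2 = false -> f 3 = false -> length (filter f [0;1;2;3]) <= 1.
Proof. intros f H1 H2 H3. simpl. rewrite H1, H2, H3. destruct (f 0); simpl; lia. Qed.

Lemma filt_0 : forall f : nat -> bool, f 0 = false -> f 1 = false -> f 2 = false -> f 3 = false -> length (filter f [0;1;2;3]) = 0.
Proof. intros f H0 H1 H2 H3. simpl. rewrite H0, H1, H2, H3. auto. Qed.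

Lemma deg_root : forall b c, deg_val (Sfam rho b) c [] = if Nat.even c then 4 else 3.
Proof.
  intros b c. unfold deg_val. simpl. rewrite !Sfam_short by (simpl; pose proof R_ge2; lia).
  destruct (Nat.even c); reflexivity.
Qed.

Lemma deg_inner : forall b c p, Sfam rho b c p = true -> p <> [] -> length p < R ->
  deg_val (Sfam rho b) c p = 3.
Proof.
  intros b c p H Hne Hl. unfold deg_val. destruct p as [|j p']; [congruence|].
  remember (j :: p') as p eqn:Ep. rewrite Sfam_short in H by lia.
  rewrite (filter_ext_in _ (fun i => i <? 2)).
  - simpl; auto.
  - intros i _. rewrite Sfam_short by (rewrite length_app; simpl; lia). rewrite Tq_app, H; auto. simpl.
    rewrite andb_true_r; auto.
Qed.

Lemma deg_M_even_inner : forall c p, Nat.even c = true -> Sfam rho false c p = true -> p <> [] ->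
  deg_val (Sfam rho false) c p = 3.
Proof.
  intros c p He H Hne. assert (E : Sfam rho false c = Tq 4) by (unfold Sfam, SM; rewrite He; auto).
  unfold deg_val. destruct p as [|j p']; [congruence|]. remember (j :: p') as p eqn:Ep. rewrite E in H |- *.
  rewrite (filter_ext_in _ (fun i => i <? 2)).
  - simpl; auto.
  - intros i _. rewrite Tq_app, H; auto. simpl. rewrite andb_true_r; auto.
Qed.

Lemma deg_odd_le3 : forall b c p, Nat.even c = false -> Sfam rho b c p = true -> deg_val (Sfam rho b) c p <= 3.
Proof.
  intros b c p He H. destruct p as [|j p']; [rewrite deg_root, He; auto|].
  assert (H0 : forall i, 2 <= i -> Sfam rho b c ((j :: p') ++ [i]) = false).
  { intros i Hi. rewrite Sfam_odd by auto. destruct (Kq rho 3 c ((j :: p') ++ [i])) eqn:E; auto. apply Kq_Tq in E.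
    rewrite Tq_app in E by discriminate. apply andb_true_iff in E. destruct E as [_ E]. simpl in E.
    rewrite andb_true_r in E. apply Nat.ltb_lt in E. lia. }
  unfold deg_val.
  pose proof (filt_le2 (fun i => Sfam rho b c ((j :: p') ++ [i])) (H0 2 ltac:(lia)) (H0 3 ltac:(lia))). lia.
Qed.

Lemma SN_K : forall c, exists q, 3 <= q <= 4 /\ Sfam rho true c = Kq rho q c.
Proof. intros c. unfold Sfam, SN. destruct (Nat.even c); [exists 4|exists 3]; split; auto; lia. Qed.

Lemma deg_deep_le2 : forall c p, Sfam rho true c p = true -> R <= length p -> deg_val (Sfam rho true) c p <= 2.
Proof.
  intros c p H Hl. destruct (SN_K c) as [q [Hq E]].
  destruct p as [|j p']; [simpl in Hl; pose proof R_ge2; lia|].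
  assert (H0 : forall i, 1 <= i -> Sfam rho true c ((j :: p') ++ [i]) = false).
  { intros i Hi. rewrite E. destruct (Kq rho q c ((j :: p') ++ [i])) eqn:E2; auto. unfold Kq in E2.
    apply andb_true_iff in E2. destruct E2 as [_ E2]. apply orb_true_iff in E2. rewrite length_app in E2; simpl length in E2.
    destruct E2 as [E2|E2]; [apply Nat.leb_le in E2; simpl length in Hl; lia|]. apply andb_true_iff in E2; destruct E2 as [E2 _].
    rewrite skipn_app_ge in E2 by (simpl length in *; lia). unfold fz in E2; rewrite forallb_app in E2. simpl forallb in E2.
    destruct i; [lia|]. rewrite andb_false_r in E2; discriminate. }
  unfold deg_val.
  pose proof (filt_le1 (fun i => Sfam rho true c ((j :: p') ++ [i])) (H0 1 ltac:(lia)) (H0 2 ltac:(lia)) (H0 3 ltac:(lia))). lia.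
Qed.
End Conc.

Lemma fz_snoc0 : forall l, fz (l ++ [0]) = fz l.
Proof. intros; unfold fz; rewrite forallb_app; simpl; rewrite !andb_true_r; auto. Qed.

Section Rigid.
Variable rho : nat.
Notation R := (RR rho).
Notation SNf := (Sfam rho true).
Notation VN := (VF (Sfam rho true)).
Notation EN := (EF (Sfam rho true)).

Definition Lof (c : nat) (p : list nat) := Lc rho c (firstn R p).
Definition leafP (c : nat) (p : list nat) := R <= length p /\ length p - R = Lof c p.

Lemma child0 : forall c p, SNf c p = true -> ~ leafP c p -> SNf c (p ++ [0]) = true.
Proof.
  intros c p H Hnl. destruct (SN_K rho c) as [q [Hq E]]. rewrite E in *.
  destruct (le_lt_dec R (length p)) as [Hl|Hl].
  - unfold Kq in *. apply andb_true_iff in H. destruct H as [HT H].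
    apply andb_true_iff; split.
    + destruct p as [|j p']; [simpl in Hl; pose proof (R_ge2 rho); lia|]. rewrite Tq_app by discriminate. rewrite HT; auto.
    + apply orb_true_iff; right. rewrite skipn_app_ge, firstn_app_ge by lia. rewrite length_app; simpl length.
      rewrite fz_snoc0.
      apply orb_true_iff in H. destruct H as [H|H].
      * apply Nat.leb_le in H. assert (length p = R) by lia. rewrite skipn_all2 by lia. simpl.
        apply Nat.leb_le. unfold Lc, base. lia.
      * apply andb_true_iff in H. destruct H as [H1 H2]. rewrite H1. simpl. apply Nat.leb_le in H2. apply Nat.leb_le.
        unfold leafP, Lof in Hnl. lia.
  - rewrite Kq_short by (rewrite length_app; simpl; lia). apply Kq_Tq in H.
    destruct p as [|j p']; [simpl; destruct q; [lia|]; auto|]. rewrite Tq_app, H by discriminate. auto.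
Qed.

Lemma leaf_deg : forall c p, SNf c p = true -> leafP c p -> deg_val SNf c p = 1.
Proof.
  intros c p H [Hl HL]. destruct (SN_K rho c) as [q [Hq E]].
  destruct p as [|j p']; [simpl in Hl; pose proof (R_ge2 rho); lia|].
  unfold deg_val. rewrite filt_0; auto.
  all: rewrite E; unfold Kq; apply andb_false_iff; right; apply orb_false_iff; split;
    [apply Nat.leb_gt; rewrite length_app; simpl length in *; lia|].
  all: apply andb_false_iff; right; apply Nat.leb_gt; rewrite firstn_app_ge by (simpl length in *; lia);
    rewrite length_app; fold (Lof c (j :: p')); simpl length in *; lia.
Qed.

Lemma deg1_leaf : forall c p, SNf c p = true -> deg_val SNf c p = 1 -> leafP c p.
Proof.
  intros c p H Hd. destruct (classic (leafP c p)) as [Hl|Hnl]; auto. exfalso.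
  pose proof (child0 c p H Hnl) as Hc.
  destruct p as [|j p'].
  - rewrite deg_root in Hd. destruct (Nat.even c); lia.
  - unfold deg_val in Hd. cbn [filter] in Hd. rewrite Hc in Hd. cbn [length] in Hd. lia.
Qed.

Lemma len_bound : forall c p, SNf c p = true -> length p <= R + Lof c p.
Proof.
  intros c p H. destruct (SN_K rho c) as [q [Hq E]]. rewrite E in H. unfold Kq in H.
  apply andb_true_iff in H. destruct H as [_ H]. apply orb_true_iff in H. destruct H as [H|H].
  - apply Nat.leb_le in H; lia.
  - apply andb_true_iff in H; destruct H as [_ H]. apply Nat.leb_le in H. unfold Lof; lia.
Qed.

Lemma entries4 : forall c p, SNf c p = true -> forall i, In i p -> i < 4.
Proof.
  intros c p H. destruct (SN_K rho c) as [q [Hq E]]. rewrite E in H. apply Kq_Tq in H.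
  intros; eapply (Tq_lt4 q); eauto; lia.
Qed.

Lemma Lof_lt : forall c p, SNf c p = true -> Lof c p < base rho + 4 ^ R * S c.
Proof.
  intros c p H. unfold Lof, Lc.
  assert (num (firstn R p) < 4 ^ R).
  { destruct (le_lt_dec R (length p)).
    - replace R with (length (firstn R p)) at 2 by (rewrite length_firstn; lia).
      apply num_lt. intros i Hi. apply in_firstn' in Hi. eapply entries4; eauto.
    - assert (num (firstn R p) < 4 ^ length (firstn R p)).
      { apply num_lt. intros i Hi. apply in_firstn' in Hi. eapply entries4; eauto. }
      rewrite length_firstn in H0. assert (4 ^ Nat.min R (length p) <= 4 ^ R) by (apply Nat.pow_le_mono_r; lia). lia. }
  set (P := 4 ^ R) in *. nia.
Qed.

Lemma num_inj : forall b b', length b = length b' -> (forall i, In i b -> i < 4) -> (forall i, In i b' -> i < 4) ->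
  num b = num b' -> b = b'.
Proof.
  induction b as [|i b IH]; intros [|i' b'] Hl H H' Hn; simpl in *; try lia; auto.
  assert (i < 4) by auto. assert (i' < 4) by auto.
  assert (i = i') by lia. subst. f_equal. apply IH; auto. lia.
Qed.

Lemma fz_repeat_eq : forall l, fz l = true -> l = repeat 0 (length l).
Proof.
  induction l; simpl; auto. intro H. apply andb_true_iff in H. destruct H as [H1 H2].
  destruct a; [|discriminate]. f_equal; auto.
Qed.

Lemma leaf_inj : forall c p c' p', SNf c p = true -> SNf c' p' = true -> leafP c p -> leafP c' p' ->
  Lof c p = Lof c' p' -> c = c' /\ p = p'.
Proof.
  intros c p c' p' H H' [Hl HL] [Hl' HL'] HE.
  assert (Hn1 : num (firstn R p) < 4 ^ R).
  { replace R with (length (firstn R p)) at 2 by (rewrite length_firstn; lia).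
    apply num_lt. intros i Hi. apply in_firstn' in Hi. apply (entries4 c p H); auto. }
  assert (Hn2 : num (firstn R p') < 4 ^ R).
  { replace R with (length (firstn R p')) at 2 by (rewrite length_firstn; lia).
    apply num_lt. intros i Hi. apply in_firstn' in Hi. apply (entries4 c' p' H'); auto. }
  unfold Lof, Lc in HE. set (P := 4 ^ R) in *.
  assert (c = c').
  { destruct (lt_eq_lt_dec c c') as [[Hc|Hc]|Hc]; auto; exfalso.
    - assert (P * c + P <= P * c') by nia. lia.
    - assert (P * c' + P <= P * c) by nia. lia. }
  subst c'. split; auto.
  assert (Hb : firstn R p = firstn R p').
  { apply num_inj; [rewrite !length_firstn; lia| | |lia];
    intros i Hi; apply in_firstn' in Hi; [apply (entries4 c p H)|apply (entries4 c p' H')]; auto. }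
  assert (Hz : forall q, SNf c q = true -> R < length q -> fz (skipn R q) = true).
  { intros q Hq Hlq. destruct (SN_K rho c) as [qq [_ E]]. rewrite E in Hq. unfold Kq in Hq.
    apply andb_true_iff in Hq. destruct Hq as [_ Hq]. apply orb_true_iff in Hq. destruct Hq as [Hq|Hq].
    - apply Nat.leb_le in Hq; lia.
    - apply andb_true_iff in Hq; tauto. }
  assert (Lof c p >= 1) by (unfold Lof, Lc, base; lia).
  assert (Lof c p' >= 1) by (unfold Lof, Lc, base; lia).
  rewrite <- (firstn_skipn R p), <- (firstn_skipn R p'). rewrite Hb. f_equal.
  rewrite (fz_repeat_eq (skipn R p)), (fz_repeat_eq (skipn R p')); try (apply Hz; auto; lia).
  rewrite !length_skipn. f_equal. unfold Lof, Lc in *. fold P in HL, HL'. rewrite Hb in HL. lia.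
Qed.

Definition Qinv {V} (E : V -> V -> Prop) (x : V) (k : nat) : Prop :=
  has_degree E x 1 /\ (exists z n, walk E x z k /\ 3 <= n /\ has_degree E z n) /\
  (forall z j n, j < k -> walk E x z j -> has_degree E z n -> n <= 2).

Lemma Qinv_unique : forall {V} (E : V -> V -> Prop) x k k', Qinv E x k -> Qinv E x k' -> k = k'.
Proof.
  intros V E x k k' [_ [[z [n [Hw [Hn Hd]]]] H3]] [_ [[z' [n' [Hw' [Hn' Hd']]]] H3']].
  destruct (lt_eq_lt_dec k k') as [[H|H]|H]; auto; exfalso.
  - specialize (H3' z k n H Hw Hd). lia.
  - specialize (H3 z' k' n' H Hw' Hd'). lia.
Qed.

Lemma Qinv_aut : forall {V} (E : V -> V -> Prop) f g, (forall x, g (f x) = x) -> (forall x, f (g x) = x) ->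
  (forall x y, E x y <-> E (f x) (f y)) -> forall x k, Qinv E x k -> Qinv E (f x) k.
Proof.
  intros V E f g Hgf Hfg HE x k [H1 [[z [n [Hw [Hn Hd]]]] H3]]. split; [|split].
  - eapply aut_degree; eauto.
  - exists (f z), n. split; [eapply aut_walk; eauto|]. split; auto. eapply aut_degree; eauto.
  - intros z' j n' Hj Hw' Hd'. apply (H3 (g z') j n' Hj).
    + rewrite <- (Hgf x). eapply aut_walk_inv; eauto.
    + eapply aut_degree_inv; eauto.
Qed.

Lemma degN : forall x n, has_degree EN x n -> n = deg_val SNf (fst (proj1_sig x)) (snd (proj1_sig x)).
Proof.
  intros x n H. eapply has_degree_unique; eauto. apply fam_degree.
  - intros; eapply Sfam_pc; eauto.
  - intros; eapply Sfam_4; eauto.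
Qed.

Lemma hdegN : forall x, has_degree EN x (deg_val SNf (fst (proj1_sig x)) (snd (proj1_sig x))).
Proof. intros; apply fam_degree; [intros; eapply Sfam_pc; eauto|intros; eapply Sfam_4; eauto]. Qed.

Lemma Q_leaf : forall (x : VN), leafP (fst (proj1_sig x)) (snd (proj1_sig x)) ->
  Qinv EN x (S (Lof (fst (proj1_sig x)) (snd (proj1_sig x)))).
Proof.
  intros [[c p] H] HL. cbn [fst snd proj1_sig] in *. pose proof HL as [Hl HLL].
  split; [|split].
  - pose proof (hdegN (exist _ (c, p) H)). cbn [fst snd proj1_sig] in H0. rewrite leaf_deg in H0; auto.
  - set (a := firstn (R - 1) p). set (s := skipn (R - 1) p).
    assert (Hp : p = a ++ s) by (symmetry; apply firstn_skipn).
    assert (Ha : SNf c a = true) by (apply (pc_app _ (fun c p i => Sfam_pc rho true c p i)) with s; rewrite <- Hp; auto).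
    assert (Hs : length s = S (Lof c p)) by (unfold s; rewrite length_skipn; pose proof (R_ge2 rho); lia).
    assert (Hx : SNf c (a ++ s) = true) by (rewrite <- Hp; auto).
    exists (exist _ (c, a) Ha), 3. split; [|split; [lia|]].
    + replace (exist (fun x => SNf (fst x) (snd x) = true) (c, p) H) with
        (exist (fun x => SNf (fst x) (snd x) = true) (c, a ++ s) Hx) by (apply VF_eq; simpl; rewrite <- Hp; auto).
      rewrite <- Hs. apply walk_up. intros; eapply Sfam_pc; eauto.
    + pose proof (hdegN (exist _ (c, a) Ha)) as Hd. cbn [fst snd proj1_sig] in Hd. rewrite deg_inner in Hd; auto.
      * unfold a; intro E. apply (f_equal (@length nat)) in E. rewrite length_firstn in E. simpl in E. pose proof (R_ge2 rho); lia.
      * unfold a; rewrite length_firstn; pose proof (R_ge2 rho); lia.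
  - intros z j n Hj Hw Hd. apply degN in Hd. subst n.
    destruct z as [[cz pz] Hz]; simpl in *.
    apply walk_len in Hw. simpl in Hw. apply deg_deep_le2; auto. lia.
Qed.

Lemma N_leaf_fixed : forall f g, (forall x, g (f x) = x) -> (forall x, f (g x) = x) ->
  (forall x y, EN x y <-> EN (f x) (f y)) -> forall x, has_degree EN x 1 -> f x = x.
Proof.
  intros f g Hgf Hfg HE x Hd.
  assert (Hx : leafP (fst (proj1_sig x)) (snd (proj1_sig x))).
  { apply degN in Hd. apply deg1_leaf; auto. apply (proj2_sig x). }
  pose proof (Q_leaf x Hx) as Qx.
  pose proof (Qinv_aut EN f g Hgf Hfg HE _ _ Qx) as Qfx.
  assert (Hfx : leafP (fst (proj1_sig (f x))) (snd (proj1_sig (f x)))).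
  { apply deg1_leaf; [apply (proj2_sig (f x))|]. symmetry; apply degN. eapply aut_degree; eauto. }
  pose proof (Q_leaf (f x) Hfx) as Qfx'.
  pose proof (Qinv_unique _ _ _ _ Qfx Qfx') as Hk. injection Hk; intro Hk'.
  destruct (leaf_inj _ _ _ _ (proj2_sig x) (proj2_sig (f x)) Hx Hfx Hk') as [H1 H2].
  apply VF_eq. destruct (proj1_sig x), (proj1_sig (f x)); simpl in *; congruence.
Qed.

Definition Bd (c : nat) := R + base rho + 4 ^ R * S c + 1.

Lemma N_rigid : rigid VN EN.
Proof.
  intros f [[g [Hgf Hfg]] HE].
  assert (Main : forall n x, Bd (fst (proj1_sig x)) - length (snd (proj1_sig x)) <= n -> f x = x).
  { induction n; intros x Hn.
    - exfalso. destruct x as [[c p] H]; simpl in *. pose proof (len_bound c p H). pose proof (Lof_lt c p H).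
      unfold Bd in Hn. lia.
    - destruct (classic (leafP (fst (proj1_sig x)) (snd (proj1_sig x)))) as [Hl|Hnl].
      + apply (N_leaf_fixed f g); auto. pose proof (hdegN x). rewrite leaf_deg in H; auto. apply (proj2_sig x).
      + destruct x as [[c p] H]; cbn [fst snd proj1_sig] in *.
        pose proof (child0 c p H Hnl) as Hc.
        pose proof (len_bound c p H). pose proof (Lof_lt c p H).
        set (x := exist (fun x => SNf (fst x) (snd x) = true) (c, p) H).
        set (w := exist (fun x => SNf (fst x) (snd x) = true) (c, p ++ [0]) Hc).
        assert (Hw : f w = w) by (apply IHn; cbn [fst snd proj1_sig w]; rewrite length_app; simpl length; unfold Bd in *; lia).
        assert (Exw : EN x w) by (split; auto; exists 0; left; auto).
        apply (proj1 (HE x w)) in Exw. rewrite Hw in Exw.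
        destruct Exw as [Hf [j [Hj|Hj]]]; cbn [fst snd proj1_sig x w] in Hf, Hj.
        * apply app_inj_tail in Hj. destruct Hj as [Hj _]. apply VF_eq. cbn [proj1_sig x].
          destruct (proj1_sig (f x)); cbn [fst snd] in *; congruence.
        * assert (Hy : f (f x) = f x).
          { apply IHn. rewrite Hf, Hj. rewrite !length_app. simpl length. unfold Bd in *; lia. }
          rewrite <- (Hgf (f x)), Hy; auto. }
  intro x. apply (Main (Bd (fst (proj1_sig x)) - length (snd (proj1_sig x))) x). lia.
Qed.
End Rigid.

Section MClass.
Variable rho : nat.
Notation SMf := (Sfam rho false).
Notation VM := (VF (Sfam rho false)).
Notation EM := (EF (Sfam rho false)).

Lemma hdegM : forall x, has_degree EM x (deg_val SMf (fst (proj1_sig x)) (snd (proj1_sig x))).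
Proof. intros; apply fam_degree; [intros; eapply Sfam_pc; eauto|intros; eapply Sfam_4; eauto]. Qed.

Lemma degM : forall x n, has_degree EM x n -> n = deg_val SMf (fst (proj1_sig x)) (snd (proj1_sig x)).
Proof. intros x n H. eapply has_degree_unique; eauto. apply hdegM. Qed.

Lemma M_in_class : in_class VM EM.
Proof.
  split; [split; [apply EF_irrefl|apply EF_sym]|]. split; [apply fam_acyclic|].
  intros k Hk. split.
  - exists (map (fun j => rootV rho false (2 * j)) (seq 0 k)). split; [|split].
    + apply Injective_map_NoDup; [|apply seq_NoDup]. intros j j' E.
      apply (f_equal (@proj1_sig _ _)) in E. simpl in E. inversion E. lia.
    + rewrite length_map, length_seq; auto.
    + intros v Hv. apply in_map_iff in Hv. destruct Hv as [j [Hj _]]. subst v.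
      pose proof (hdegM (rootV rho false (2 * j))) as H. cbn [rootV fst snd proj1_sig] in H.
      rewrite deg_root in H. replace (Nat.even (2 * j)) with true in H; auto.
      rewrite <- (Nat.add_0_l (2 * j)), Nat.even_add_mul_2; auto.
  - intros x y Hy [Hw Hmin].
    apply degM in Hy. destruct y as [[cy py] Hpy]. cbn [fst snd proj1_sig] in *.
    destruct (Nat.even cy) eqn:Ev.
    + destruct py as [|j p'].
      * assert (Hx : fst (proj1_sig x) = cy) by (apply walk_fst in Hw; simpl in Hw; auto).
        destruct x as [[cx px] Hpx]. cbn [fst snd proj1_sig] in *. subst cx.
        destruct px as [|j p'].
        -- exfalso. assert (E : exist (fun x => SMf (fst x) (snd x) = true) (cy, []) Hpx =
                                exist (fun x => SMf (fst x) (snd x) = true) (cy, []) Hpy) by (apply VF_eq; auto).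
           rewrite E in Hw, Hmin. specialize (Hmin 0 (walk_nil _ _)). lia.
        -- pose proof (hdegM (exist _ (cy, j :: p') Hpx)) as Hd. cbn [fst snd proj1_sig] in Hd.
           rewrite deg_M_even_inner in Hd; auto. discriminate.
      * rewrite deg_M_even_inner in Hy; auto; try discriminate. 
    + pose proof (deg_odd_le3 rho false cy py Ev Hpy). lia.
Qed.
End MClass.

Lemma rr_mono : forall m n, m <= n -> rr m <= rr n.
Proof. intros m n H; induction H; simpl; lia. Qed.

Lemma qd_max : forall (Delta : list formula) phi, In phi Delta -> qd phi <= fold_right Nat.max 0 (map qd Delta).
Proof. induction Delta; simpl; intros; [tauto|]. destruct H; subst; [lia|]. apply IHDelta in H; lia. Qed.

Theorem part1 : forall (Gamma : formula -> Prop)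
  (Hsent : forall phi, Gamma phi -> sentence phi)
  (Hmod : forall (V : Type) (E : V -> V -> Prop), is_model V E Gamma <-> in_class V E),
  forall Delta : list formula,
     (forall phi, In phi Delta -> Gamma phi) ->
     exists (V : Type) (E : V -> V -> Prop),
       is_model V E (fun phi => In phi Delta) /\ rigid V E.
Proof.
  intros Gamma Hsent Hmod Delta HD.
  set (d := fold_right Nat.max 0 (map qd Delta)). set (rho := rr d).
  exists (VF (Sfam rho true)), (EF (Sfam rho true)). split; [|apply N_rigid].
  split; [constructor; exact (rootV rho true 0)|].
  intros phi Hphi env.
  assert (HM : is_model (VF (Sfam rho false)) (EF (Sfam rho false)) Gamma) by (apply Hmod; apply M_in_class).
  destruct (inv_init (EF (Sfam rho true)) (EF (Sfam rho false)) d (rootV rho true 0)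
     (rich_fam rho (rr d) true false (le_n _))) as [v2 HI].
  assert (HG := inv_game _ _ (EF_sym _) (EF_sym _) d
     (fun m Hm => conj (rich_fam rho (rr m) true false (rr_mono m d ltac:(lia)))
                       (rich_fam rho (rr m) false true (rr_mono m d ltac:(lia)))) _ _ HI).
  rewrite (sentence_env _ phi env (fun _ => rootV rho true 0)) by (apply Hsent; auto).
  rewrite (game_sat _ _ phi d _ _ HG) by (apply qd_max; auto).
  apply (proj2 HM); auto.
Qed.

Section Tree.
Context {V : Type} (E : V -> V -> Prop).
Hypothesis HC : in_class V E.

Lemma c_irr : forall x, ~ E x x.
Proof. apply HC. Qed.
Lemma c_sym : forall x y, E x y -> E y x.
Proof. apply HC. Qed.
Lemma c_acyc : ~ has_cycle E.
Proof. apply HC. Qed.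

Definition comp (y x : V) := exists k, walk E y x k.
Definition deg4 (y : V) := has_degree E y 4.

Lemma min_nat : forall (P : nat -> Prop) n, P n -> exists m, P m /\ forall m', P m' -> m <= m'.
Proof.
  intros P n. induction n as [n IH] using (well_founded_induction lt_wf). intros Hn.
  destruct (classic (exists m', m' < n /\ P m')) as [[m' [Hm' Pm']]|Hno].
  - apply (IH m'); auto.
  - exists n; split; auto. intros m' Pm'. destruct (le_lt_dec n m'); auto. exfalso; apply Hno; eauto.
Qed.

Lemma comp_deg3 : forall y x, deg4 y -> comp y x -> x <> y -> has_degree E x 3.
Proof.
  intros y x Hy [k Hk] Hne. destruct (min_nat (fun k => walk E y x k) k Hk) as [m [Hm Hmin]].
  destruct m. { apply walk_0 in Hm; congruence. }
  apply (proj2 (proj2 (proj2 HC) (S m) ltac:(lia)) x y Hy). split; auto.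
Qed.

Lemma deg4_sep : forall y y', deg4 y -> deg4 y' -> comp y y' -> y = y'.
Proof.
  intros y y' Hy Hy' Hc. destruct (classic (y' = y)) as [H|H]; auto. exfalso.
  pose proof (comp_deg3 y y' Hy Hc H). pose proof (has_degree_unique _ _ _ _ Hy' H0). lia.
Qed.

Lemma comp_has_deg : forall y x, deg4 y -> comp y x -> exists n, 3 <= n /\ has_degree E x n.
Proof.
  intros y x Hy Hc. destruct (classic (x = y)) as [H|H]; [subst; exists 4; split; auto|].
  exists 3; split; auto. eapply comp_deg3; eauto.
Qed.

Definition nb (u : V) : list V := epsilon (inhabits []) (fun l => NoDup l /\ forall z, E u z <-> In z l).

Lemma nb_spec : forall u n, has_degree E u n -> NoDup (nb u) /\ length (nb u) = n /\ forall z, E u z <-> In z (nb u).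
Proof.
  intros u n Hd. assert (H : NoDup (nb u) /\ forall z, E u z <-> In z (nb u)).
  { unfold nb. apply epsilon_spec. destruct Hd as [l [H1 [H2 H3]]]. exists l; auto. }
  destruct H as [H1 H2]. split; [auto|split; [|auto]].
  symmetry. eapply has_degree_unique; eauto. exists (nb u); auto.
Qed.

Definition neqb (a b : V) : bool := if excluded_middle_informative (a = b) then false else true.
Definition ch (u par : V) : list V := filter (fun z => neqb z par) (nb u).

Lemma filter_neq_notin : forall (l : list V) a, ~ In a l -> filter (fun z => neqb z a) l = l.
Proof.
  induction l as [|b l IH]; intros a Ha; simpl; auto. unfold neqb at 1. destruct excluded_middle_informative.
  - subst; exfalso; apply Ha; simpl; auto.
  - f_equal; apply IH; intro; apply Ha; simpl; auto.
Qed.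

Lemma filter_neq_len : forall (l : list V) a, NoDup l -> In a l -> length (filter (fun z => neqb z a) l) + 1 = length l.
Proof.
  induction l as [|b l IH]; intros a Hnd Ha; simpl in *; [tauto|]. inversion Hnd; subst.
  unfold neqb at 1. destruct excluded_middle_informative as [E1|E1].
  - subst b. rewrite filter_neq_notin; auto. simpl. lia.
  - simpl. destruct Ha as [Ha|Ha]; [congruence|]. rewrite IH; auto.
Qed.

Lemma ch_in : forall u par z, In z (ch u par) <-> In z (nb u) /\ z <> par.
Proof.
  intros. unfold ch. rewrite filter_In. unfold neqb. destruct excluded_middle_informative; intuition congruence.
Qed.

Definition step (st : V * V) (i : nat) : V * V := (nth i (ch (fst st) (snd st)) (fst st), fst st).
Fixpoint walkp (st : V * V) (p : list nat) : V * V :=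
  match p with [] => st | i :: r => walkp (step st i) r end.

Lemma walkp_snoc : forall p st i, walkp st (p ++ [i]) = step (walkp st p) i.
Proof. induction p; simpl; auto. Qed.

Variable y : V.
Hypothesis Hy : deg4 y.

Definition pr (p : list nat) := walkp (y, y) p.
Definition io (p : list nat) := fst (pr p).
Definition VP (p : list nat) := Tq 4 p = true.

Lemma VP_pc : forall p i, VP (p ++ [i]) -> VP p.
Proof. unfold VP; intros; eapply Tq_pc; eauto. Qed.

Lemma VP_i : forall p i, VP (p ++ [i]) -> (p = [] -> i < 4) /\ (p <> [] -> i < 2).
Proof.
  unfold VP; intros p i H. destruct p as [|j p'].
  - simpl in H. apply andb_true_iff in H. destruct H as [H _]. apply Nat.ltb_lt in H. split; [auto|congruence].
  - rewrite Tq_app in H by discriminate. apply andb_true_iff in H. destruct H as [_ H]. simpl in H.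
    rewrite andb_true_r in H. apply Nat.ltb_lt in H. split; [discriminate|auto].
Qed.

Lemma VP_snoc : forall p i, VP p -> (p = [] -> i < 4) -> (p <> [] -> i < 2) -> VP (p ++ [i]).
Proof.
  unfold VP; intros p i H H1 H2. destruct p as [|j p'].
  - simpl. rewrite andb_true_r. apply Nat.ltb_lt; auto.
  - rewrite Tq_app by discriminate. rewrite H. simpl. rewrite andb_true_r. apply Nat.ltb_lt. apply H2; discriminate.
Qed.

Lemma y_notin : ~ In y (nb y).
Proof. intro H. destruct (nb_spec y 4 Hy) as [_ [_ H3]]. apply H3 in H. apply (c_irr y); auto. Qed.

Lemma ch_y : ch y y = nb y.
Proof. unfold ch. apply filter_neq_notin, y_notin. Qed.

Lemma Inv2 : forall p, VP p ->
  comp y (io p) /\ (p = [] -> pr p = (y, y)) /\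
  (p <> [] -> E (io p) (snd (pr p)) /\ snd (pr p) = io (removelast p)).
Proof.
  induction p as [|i p IH] using rev_ind; intros Hp.
  - split; [exists 0; constructor|]. split; auto. intros; congruence.
  - assert (Hp0 : VP p) by (eapply VP_pc; eauto). destruct (IH Hp0) as [H1 [H2 H3]].
    unfold io, pr in *. rewrite walkp_snoc. unfold step. simpl.
    set (u := fst (walkp (y, y) p)) in *. set (par := snd (walkp (y, y) p)) in *.
    destruct (comp_has_deg y u Hy H1) as [n [Hn Hd]].
    destruct (nb_spec u n Hd) as [Hnd [Hl Hnb]].
    assert (Hlen : i < length (ch u par)).
    { destruct (VP_i p i Hp) as [Hi1 Hi2]. destruct p as [|j p'].
      - specialize (H2 eq_refl). unfold u, par in *; rewrite H2; simpl. rewrite ch_y.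
        destruct (nb_spec y 4 Hy) as [_ [Hl4 _]]. rewrite Hl4. auto.
      - destruct (H3 ltac:(discriminate)) as [HE _]. apply Hnb in HE.
        pose proof (filter_neq_len (nb u) par Hnd HE). unfold ch. specialize (Hi2 ltac:(discriminate)). lia. }
    assert (Hin : In (nth i (ch u par) u) (ch u par)) by (apply nth_In; auto).
    apply ch_in in Hin. destruct Hin as [Hin Hne]. apply Hnb in Hin.
    split; [|split].
    + destruct H1 as [k Hk]. exists (S k). eapply walk_snoc; eauto.
    + intro E1. destruct p; discriminate.
    + intros _. split; [apply c_sym; auto|]. rewrite removelast_last. auto.
Qed.

Lemma child_facts : forall p i, VP (p ++ [i]) ->
  E (io p) (io (p ++ [i])) /\ In (io (p ++ [i])) (ch (io p) (snd (pr p))) /\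
  io (p ++ [i]) = nth i (ch (io p) (snd (pr p))) (io p) /\ i < length (ch (io p) (snd (pr p))).
Proof.
  intros p i Hp. pose proof (Inv2 _ Hp) as [_ [_ H3]]. destruct (H3 ltac:(destruct p; discriminate)) as [HE HR].
  rewrite removelast_last in HR. unfold io, pr in *. rewrite walkp_snoc in *. unfold step in *. simpl in *.
  assert (Hlen : i < length (ch (fst (walkp (y, y) p)) (snd (walkp (y, y) p)))).
  { destruct (le_lt_dec (length (ch (fst (walkp (y, y) p)) (snd (walkp (y, y) p)))) i); auto.
    exfalso. rewrite nth_overflow in HE; auto. apply (c_irr _ HE). }
  split; [apply c_sym; auto|]. split; [apply nth_In; auto|]. split; [reflexivity|auto].
Qed.

Lemma par_eq : forall p, VP p -> p <> [] -> snd (pr p) = io (removelast p).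
Proof. intros p Hp Hne. apply (Inv2 p Hp); auto. Qed.

Lemma io_nil : io [] = y.
Proof. reflexivity. Qed.

Lemma child_ne_par : forall p i, VP (p ++ [i]) -> p <> [] -> io (p ++ [i]) <> io (removelast p).
Proof.
  intros p i Hp Hne. destruct (child_facts p i Hp) as [_ [Hin _]]. apply ch_in in Hin.
  rewrite par_eq in Hin; [tauto| |auto]. eapply VP_pc; eauto.
Qed.

Inductive nbw : list V -> Prop :=
| nbw1 : forall x, nbw [x]
| nbw2 : forall x z, E x z -> nbw [x; z]
| nbw3 : forall l a b c, nbw (l ++ [a; b]) -> E b c -> a <> c -> nbw (l ++ [a; b; c]).

Lemma chain_snoc : forall (l : list V) b c, chain E (l ++ [b]) -> E b c -> chain E (l ++ [b; c]).
Proof.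
  induction l as [|a l IH]; intros b c H1 H2; simpl in *; [auto|].
  destruct l as [|a' l]; simpl in *; [tauto|]. destruct H1; split; auto. apply (IH b c); auto.
Qed.

Lemma chain_suffix : forall (A B : list V), chain E (A ++ B) -> chain E B.
Proof.
  induction A as [|a A IH]; intros B H; simpl in *; auto. apply IH.
  destruct (A ++ B) as [|b l]; simpl; auto. tauto.
Qed.

Lemma chain_prefix : forall (A B : list V), chain E (A ++ B) -> chain E A.
Proof.
  induction A as [|a A IH]; intros B H; simpl in *; auto. destruct A as [|a' A]; auto.
  simpl in H. destruct H; split; auto. apply (IH B); auto.
Qed.

Lemma nbw_chain : forall l, nbw l -> chain E l.
Proof.
  intros l H; induction H; simpl; auto. replace (l ++ [a; b; c]) with ((l ++ [a]) ++ [b; c]) by (rewrite <- app_assoc; auto).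
  apply chain_snoc; auto. rewrite <- app_assoc; auto.
Qed.

Lemma nbw_nodup : forall l, nbw l -> NoDup l.
Proof.
  intros l H; induction H.
  - repeat constructor; auto.
  - constructor; [|repeat constructor; auto]. intros [H'|[]]; subst; eapply c_irr; eauto.
  - assert (Hch : chain E (l ++ [a; b; c])) by (apply nbw_chain; constructor; auto).
    replace (l ++ [a; b; c]) with ((l ++ [a; b]) ++ [c]) in * by (rewrite <- app_assoc; auto).
    apply NoDup_app; auto; [repeat constructor; auto|]. intros x Hx [Hxc|[]]; subst x.
    apply in_app_or in Hx. destruct Hx as [Hx|Hx].
    + apply in_split in Hx. destruct Hx as [A [B HAB]]. subst l.
      apply c_acyc. exists c, (B ++ [a; b]). split; [|split; [|split]].
      * rewrite <- !app_assoc in IHnbw. simpl in IHnbw. apply NoDup_app_remove_l in IHnbw. auto.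
      * rewrite length_app; simpl; lia.
      * rewrite <- !app_assoc in Hch. simpl in Hch. apply (chain_suffix A) in Hch.
        apply (chain_prefix _ [c]). simpl. rewrite <- app_assoc. simpl. auto.
      * replace (B ++ [a; b]) with ((B ++ [a]) ++ [b]) by (rewrite <- app_assoc; auto). rewrite last_last. auto.
    + destruct Hx as [Hx|[Hx|[]]]; subst.
      * congruence.
      * apply (c_irr c); auto.
Qed.

Lemma down_exists : forall p, VP p -> exists W1, nbw (y :: W1) /\
   (p = [] -> W1 = []) /\ (p <> [] -> exists W0, y :: W1 = W0 ++ [io (removelast p); io p]).
Proof.
  induction p as [|i p IH] using rev_ind; intros Hp.
  - exists []; split; [constructor|]. split; auto. intros; congruence.
  - assert (Hp0 : VP p) by (eapply VP_pc; eauto). destruct (IH Hp0) as [W1 [Hw [H1 H2]]].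
    destruct (child_facts p i Hp) as [HE _]. rewrite removelast_last.
    destruct p as [|j p'].
    + rewrite (H1 eq_refl) in *. exists [io ([] ++ [i])]. split; [constructor; auto|]. split; [intro; destruct i; discriminate|].
      intros _. exists []. auto.
    + destruct (H2 ltac:(discriminate)) as [W0 HW0].
      exists (W1 ++ [io ((j :: p') ++ [i])]). split; [|split; [intro E1; destruct p'; discriminate|]].
      * rewrite app_comm_cons, HW0, <- app_assoc. cbn [app]. apply nbw3; [rewrite <- HW0; auto|auto|].
        intro E1. apply (child_ne_par (j :: p') i Hp ltac:(discriminate)). auto.
      * intros _. exists (W0 ++ [io (removelast (j :: p'))]). rewrite app_comm_cons, HW0, <- !app_assoc. auto.
Qed.

Lemma climb : forall g, VP g -> forall L a b j, nbw (L ++ [a; b]) -> VP (g ++ [j]) -> b = io (g ++ [j]) ->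
  a <> io g -> exists L', nbw (L ++ [a; b] ++ L' ++ [y]).
Proof.
  induction g as [|k g IH] using rev_ind; intros Hg L a b j Hw Hgj Hb Ha.
  - exists []. simpl. apply nbw3; auto. rewrite Hb. destruct (child_facts [] j Hgj) as [HE _]. apply c_sym; auto.
  - assert (Hg0 : VP g) by (eapply VP_pc; eauto).
    assert (Hw' : nbw ((L ++ [a]) ++ [b; io (g ++ [k])])).
    { rewrite <- app_assoc. simpl. apply nbw3; auto. rewrite Hb. destruct (child_facts _ j Hgj) as [HE _]. apply c_sym; auto. }
    assert (Hbne : b <> io g).
    { rewrite Hb. intro E1. pose proof (child_ne_par (g ++ [k]) j Hgj ltac:(destruct g; discriminate)).
      rewrite removelast_last in H. auto. }
    destruct (IH Hg0 (L ++ [a]) b (io (g ++ [k])) k Hw' Hg eq_refl Hbne) as [L' HL'].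
    exists (io (g ++ [k]) :: L'). rewrite <- app_assoc in HL'. simpl in *. auto.
Qed.

Lemma list_cases : forall (p : list nat), p = [] \/ exists p0 i, p = p0 ++ [i].
Proof. intros p. destruct p as [|j p']; [left; auto|right]. destruct (exists_last (l := j :: p')) as [p0 [i H]]; [discriminate|eauto]. Qed.

Lemma tail_in : forall (W0 W1 : list V) a b, y :: W1 = W0 ++ [a; b] -> In b W1.
Proof.
  intros W0 W1 a b H. destruct W0 as [|w W0']; simpl in H; inversion H; subst; simpl; auto.
  apply in_or_app; simpl; auto.
Qed.

Lemma io_def : forall p i, io (p ++ [i]) = nth i (ch (io p) (snd (pr p))) (io p).
Proof. intros. unfold io, pr. rewrite walkp_snoc. auto. Qed.

Lemma ch_nodup : forall p, VP p -> NoDup (ch (io p) (snd (pr p))).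
Proof.
  intros p Hp. destruct (Inv2 p Hp) as [Hc _]. destruct (comp_has_deg y _ Hy Hc) as [n [_ Hd]].
  destruct (nb_spec _ _ Hd) as [Hnd _]. apply NoDup_filter; auto.
Qed.

Lemma io_inj_n : forall n p q, length p + length q <= n -> VP p -> VP q -> io p = io q -> p = q.
Proof.
  induction n; intros p q Hn Hp Hq Heq.
  - destruct p, q; simpl in *; auto; lia.
  - assert (Hnil : forall q, VP q -> q <> [] -> io q = y -> False).
    { intros q' Hq' Hne Hio. destruct (down_exists q' Hq') as [W1 [Hw [_ H2]]].
      destruct (H2 Hne) as [W0 HW0]. apply tail_in in HW0. rewrite Hio in HW0.
      apply nbw_nodup in Hw. inversion Hw; auto. }
    destruct (list_cases p) as [Ep|[p0 [i Ep]]]; destruct (list_cases q) as [Eq|[q0 [j Eq]]]; subst.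
    + auto.
    + exfalso. apply (Hnil (q0 ++ [j])); auto. destruct q0; discriminate.
    + exfalso. apply (Hnil (p0 ++ [i])); auto. destruct p0; discriminate.
    + assert (Hp0 : VP p0) by (eapply VP_pc; eauto). assert (Hq0 : VP q0) by (eapply VP_pc; eauto).
      rewrite !length_app in Hn; simpl in Hn.
      destruct (classic (io p0 = io q0)) as [E0|E0].
      * assert (p0 = q0) by (apply IHn; auto; lia). subst q0. f_equal.
        rewrite !io_def in Heq.
        destruct (child_facts p0 i Hp) as [_ [_ [_ Hi]]]. destruct (child_facts p0 j Hq) as [_ [_ [_ Hj]]].
        assert (i = j); [|subst; auto].
        eapply (proj1 (NoDup_nth _ (io p0))); eauto. apply ch_nodup; auto.
      * exfalso. destruct (down_exists (p0 ++ [i]) Hp) as [W1 [Hw [_ H2]]].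
        destruct (H2 ltac:(destruct p0; discriminate)) as [W0 HW0]. rewrite removelast_last in HW0.
        rewrite HW0 in Hw.
        destruct (climb q0 Hq0 W0 (io p0) (io (p0 ++ [i])) j Hw Hq Heq E0) as [L' HL'].
        apply nbw_nodup in HL'. rewrite app_assoc, <- HW0 in HL'. simpl in HL'.
        inversion HL'; subst. match goal with H : ~ In y _ |- _ => apply H end.
        apply in_or_app; right. apply in_or_app; right. simpl; auto.
Qed.

Lemma io_inj : forall p q, VP p -> VP q -> io p = io q -> p = q.
Proof. intros; eapply io_inj_n; eauto. Qed.

Definition Tadj (p q : list nat) := (exists i, q = p ++ [i]) \/ (exists i, p = q ++ [i]).

Lemma nbr_cases : forall p z, VP p -> E (io p) z -> exists q, VP q /\ io q = z /\ Tadj p q.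
Proof.
  intros p z Hp HE. destruct (Inv2 p Hp) as [Hc [H2 H3]].
  destruct (comp_has_deg y _ Hy Hc) as [n [Hn Hd]]. destruct (nb_spec _ _ Hd) as [Hnd [Hl Hnb]].
  pose proof HE as HE'. apply Hnb in HE'.
  destruct (classic (z = snd (pr p))) as [Ez|Ez].
  - destruct (list_cases p) as [Ep|[p0 [k Ep]]].
    + exfalso. subst p. rewrite (H2 eq_refl) in Ez. simpl in Ez. subst z. apply (c_irr y); auto.
    + exists p0. subst p. split; [eapply VP_pc; eauto|]. split.
      * rewrite Ez. rewrite par_eq; auto. rewrite removelast_last; auto. destruct p0; discriminate.
      * right; eauto.
  - assert (Hin : In z (ch (io p) (snd (pr p)))) by (apply ch_in; auto).
    destruct (In_nth _ _ (io p) Hin) as [m [Hm Hmz]].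
    exists (p ++ [m]). split; [|split; [rewrite io_def; auto|left; eauto]].
    apply VP_snoc; auto.
    + intros ->. rewrite (H2 eq_refl) in Hm. cbn [snd] in Hm. change (io []) with y in Hm. rewrite ch_y in Hm.
      destruct (nb_spec y 4 Hy) as [_ [Hl4 _]]. lia.
    + intros Hne. assert (Hu : io p <> y).
      { intro Hu. apply Hne. apply io_inj; auto. reflexivity. }
      assert (Hd3 : has_degree E (io p) 3) by (eapply comp_deg3; eauto).
      pose proof (has_degree_unique _ _ _ _ Hd Hd3). subst n.
      destruct (H3 Hne) as [Hpar _]. apply Hnb in Hpar.
      pose proof (filter_neq_len _ _ Hnd Hpar). unfold ch in Hm. lia.
Qed.

Lemma io_adj : forall p q, VP p -> VP q -> Tadj p q -> E (io p) (io q).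
Proof.
  intros p q Hp Hq [[i Hi]|[i Hi]]; subst.
  - apply (child_facts p i Hq).
  - apply c_sym. apply (child_facts q i Hp).
Qed.

Lemma io_adj_rev : forall p q, VP p -> VP q -> E (io p) (io q) -> Tadj p q.
Proof.
  intros p q Hp Hq HE. destruct (nbr_cases p (io q) Hp HE) as [q' [Hq' [Hio Ht]]].
  rewrite (io_inj q' q) in Ht; auto.
Qed.

Lemma io_surj : forall x, comp y x -> exists p, VP p /\ io p = x.
Proof.
  intros x [k Hk]. revert x Hk. induction k; intros x Hk.
  - apply walk_0 in Hk. subst. exists []. split; reflexivity.
  - destruct (walk_last _ _ _ _ Hk) as [x' [Hx' HE]]. destruct (IHk x' Hx') as [p [Hp Hio]]. subst x'.
    destruct (nbr_cases p x Hp HE) as [q [Hq [Hio _]]]. eauto.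
Qed.

Lemma io_comp : forall p, VP p -> comp y (io p).
Proof. intros; apply Inv2; auto. Qed.
End Tree.

Section Emb.
Context {V : Type} (E : V -> V -> Prop).
Hypothesis HC : in_class V E.

Lemma next_exists : forall l : list V, exists v, deg4 E v /\ ~ In v l.
Proof.
  intros l. destruct (proj2 (proj2 HC) (S (length l)) ltac:(lia)) as [[L [Hnd [HL Hdeg]]] _].
  apply NNPP. intro Hno. assert (incl L l).
  { intros v Hv. apply NNPP. intro Hn. apply Hno. exists v; split; [apply Hdeg; auto|auto]. }
  pose proof (NoDup_incl_length Hnd H). lia.
Qed.

Definition nextv (l : list V) : V := proj1_sig (constructive_indefinite_description _ (next_exists l)).
Lemma nextv_spec : forall l, deg4 E (nextv l) /\ ~ In (nextv l) l.
Proof. intros; unfold nextv; destruct constructive_indefinite_description; auto. Qed.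

Fixpoint ys (n : nat) : list V := match n with 0 => [] | S n => ys n ++ [nextv (ys n)] end.
Definition yv (n : nat) : V := nextv (ys n).

Lemma yv_deg : forall n, deg4 E (yv n).
Proof. intros; apply nextv_spec. Qed.

Lemma yv_in : forall n m, n < m -> In (yv n) (ys m).
Proof.
  intros n m; induction m; intros H; [lia|]. simpl. apply in_or_app.
  destruct (Nat.eq_dec n m); [subst; right; simpl; auto|left; apply IHm; lia].
Qed.

Lemma yv_inj : forall n m, yv n = yv m -> n = m.
Proof.
  intros n m H. destruct (lt_eq_lt_dec n m) as [[Hl|Hl]|Hl]; auto; exfalso.
  - pose proof (yv_in n m Hl). rewrite H in H0. apply (nextv_spec (ys m)); auto.
  - pose proof (yv_in m n Hl). rewrite <- H in H0. apply (nextv_spec (ys n)); auto.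
Qed.

Lemma comp_unique : forall n m x, comp E (yv n) x -> comp E (yv m) x -> n = m.
Proof.
  intros n m x [k Hk] [k' Hk']. apply yv_inj. apply deg4_sep with E; auto using yv_deg.
  exists (k + k'). eapply walk_app; eauto. apply walk_rev; auto. apply c_sym; auto.
Qed.

Definition iot (n : nat) (p : list nat) : V := io E (yv n) p.

Definition inC (x : V) := exists np : nat * list nat, VP (snd np) /\ x = iot (fst np) (snd np).

Definition Phi (pi : perm_nat) (x : V) : V :=
  match excluded_middle_informative (inC x) with
  | left H => let np := proj1_sig (constructive_indefinite_description _ H) in iot (pfun pi (fst np)) (snd np)
  | right _ => x
  end.

Lemma Phi_on : forall pi n p, VP p -> Phi pi (iot n p) = iot (pfun pi n) p.
Proof.
  intros pi n p Hp. unfold Phi. destruct excluded_middle_informative as [H|H]; [|exfalso; apply H; exists (n, p); auto].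
  destruct (constructive_indefinite_description _ H) as [[n' p'] [Hp' Heq]]. simpl in *.
  assert (n' = n).
  { apply (comp_unique n' n (iot n p)).
    - rewrite Heq. apply io_comp; auto. apply yv_deg.
    - apply io_comp; auto. apply yv_deg. }
  subst n'. assert (p' = p) by (apply (io_inj E HC (yv n) (yv_deg n)); auto). subst; auto.
Qed.

Lemma Phi_off : forall pi x, ~ inC x -> Phi pi x = x.
Proof. intros. unfold Phi. destruct excluded_middle_informative; tauto. Qed.

Lemma inC_comp : forall n x, comp E (yv n) x -> inC x.
Proof.
  intros n x Hc. destruct (io_surj E HC (yv n) (yv_deg n) x Hc) as [p [Hp Hio]]. exists (n, p); simpl; auto.
Qed.

Lemma inC_adj : forall x z, inC x -> E x z -> inC z /\ exists n p q, VP p /\ VP q /\ x = iot n p /\ z = iot n q /\ Tadj p q.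
Proof.
  intros x z [[n p] [Hp Hx]] HE. simpl in *. subst x.
  destruct (nbr_cases E HC (yv n) (yv_deg n) p z Hp HE) as [q [Hq [Hio Ht]]].
  split; [exists (n, q); simpl; auto|]. exists n, p, q. repeat split; auto.
Qed.

Definition perm_inv (pi : perm_nat) : perm_nat :=
  {| pfun := pinv pi; pinv := pfun pi; pinv_l := pinv_r pi; pinv_r := pinv_l pi |}.

Lemma Phi_inv : forall pi x, Phi (perm_inv pi) (Phi pi x) = x.
Proof.
  intros pi x. destruct (classic (inC x)) as [[[n p] [Hp Hx]]|Hn].
  - simpl in *. subst x. rewrite !Phi_on; auto. simpl. rewrite pinv_l. auto.
  - rewrite (Phi_off pi x Hn). rewrite Phi_off; auto.
Qed.

Lemma Phi_inv' : forall pi x, Phi pi (Phi (perm_inv pi) x) = x.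
Proof.
  intros pi x. destruct (classic (inC x)) as [[[n p] [Hp Hx]]|Hn].
  - simpl in *. subst x. rewrite !Phi_on; auto. simpl. rewrite pinv_r. auto.
  - rewrite (Phi_off (perm_inv pi) x Hn). rewrite Phi_off; auto.
Qed.

Lemma iot_comp : forall n p, VP p -> comp E (yv n) (iot n p).
Proof. intros; apply io_comp; auto. apply yv_deg. Qed.

Lemma comp_step : forall y a b, comp E y a -> E a b -> comp E y b.
Proof. intros y a b [k Hk] HE. exists (S k). eapply walk_snoc; eauto. Qed.

Lemma Phi_E : forall pi x z, E x z <-> E (Phi pi x) (Phi pi z).
Proof.
  intros pi x z. destruct (classic (inC x)) as [Hx|Hx].
  - split; intro HE.
    + destruct (inC_adj x z Hx HE) as [_ [n [p [q [Hp [Hq [-> [-> Ht]]]]]]]].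
      rewrite !Phi_on; auto. apply (io_adj E HC _ (yv_deg _)); auto.
    + destruct Hx as [[n p] [Hp Hx]]. simpl in *. subst x. rewrite Phi_on in HE; auto.
      destruct (classic (inC z)) as [[[m q] [Hq Hz]]|Hz].
      * simpl in *. subst z. rewrite Phi_on in HE; auto.
        assert (Hm : pfun pi m = pfun pi n).
        { apply (comp_unique (pfun pi m) (pfun pi n) (iot (pfun pi m) q)).
          - apply iot_comp; auto.
          - eapply comp_step; [apply (iot_comp (pfun pi n) p Hp)|exact HE]. }
        assert (m = n) by (rewrite <- (pinv_l pi m), <- (pinv_l pi n), Hm; auto). subst m.
        apply (io_adj E HC _ (yv_deg _)); auto. apply (io_adj_rev E HC (yv (pfun pi n)) (yv_deg _)); auto.
      * rewrite Phi_off in HE; auto. exfalso. apply Hz.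
        assert (HiC : inC (iot (pfun pi n) p)) by (exists (pfun pi n, p); auto).
        apply (inC_adj _ _ HiC HE).
  - rewrite (Phi_off pi x Hx). split; intro HE.
    + destruct (classic (inC z)) as [Hz|Hz].
      * exfalso. apply Hx. apply (inC_adj z x Hz (c_sym E HC _ _ HE)).
      * rewrite Phi_off; auto.
    + destruct (classic (inC z)) as [Hz|Hz].
      * exfalso. destruct Hz as [[m q] [Hq Hz]]. simpl in *. subst z. rewrite Phi_on in HE; auto.
        assert (HiC : inC (iot (pfun pi m) q)) by (exists (pfun pi m, q); auto).
        apply Hx. apply (inC_adj _ _ HiC (c_sym E HC _ _ HE)).
      * rewrite Phi_off in HE; auto.
Qed.

Lemma Phi_comp : forall p q x, Phi (perm_comp p q) x = Phi p (Phi q x).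
Proof.
  intros p q x. destruct (classic (inC x)) as [[[n r] [Hr Hx]]|Hx].
  - simpl in *. subst x. rewrite !Phi_on; auto.
  - rewrite (Phi_off q x Hx). rewrite !Phi_off; auto.
Qed.

Theorem embeds : embeds_S_omega V E.
Proof.
  exists Phi. split; [|split].
  - intros pi. split; [exists (Phi (perm_inv pi)); split; [apply Phi_inv|apply Phi_inv']|apply Phi_E].
  - apply Phi_comp.
  - intros p q H n. specialize (H (iot n [])). rewrite !Phi_on in H by reflexivity.
    apply yv_inj. exact H.
Qed.

End Emb.


Theorem lemma5p1 (Gamma : formula -> Prop)
  (Hsent : forall phi, Gamma phi -> sentence phi)
  (Hmod : forall (V : Type) (E : V -> V -> Prop),
            is_model V E Gamma <-> in_class V E) :
  (forall Delta : list formula,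
     (forall phi, In phi Delta -> Gamma phi) ->
     exists (V : Type) (E : V -> V -> Prop),
       is_model V E (fun phi => In phi Delta) /\ rigid V E) /\
  (forall (V : Type) (E : V -> V -> Prop),
     is_model V E Gamma -> embeds_S_omega V E).
Proof.
  split.
  - apply part1; auto.
  - intros V E HM. apply embeds. apply Hmod; auto.
Qed.
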